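(* Let $\mathcal{B}_4$, $\pi_{\lambda,\mu}$ ($\lambda\neq0,\mu\in\mathbb{R}$), the group Fourier transform and the difference operators $\Delta_{x_i}$ be as in the context. Then for a suitable distribution $\kappa$ on $\mathcal{B}_4$ (e.g. $\kappa\in\mathcal{S}(\mathbb{R}^4)$), for $h$ (e.g. in $\mathcal{S}(\mathbb{R})$) and $u\in\mathbb{R}$, $$\begin{aligned}(\Delta_{x_4}\pi_{\lambda,\mu}(\kappa))h(u)={}& i\,\partial_\lambda\{\pi_{\lambda,\mu}(\kappa)h(u)\}-\Big(\frac{\mu}{2\lambda^2}+\frac{u^2}{2}\Big)\{\Delta_{x_2}\pi_{\lambda,\mu}(\kappa)h(u)\}+u\{\Delta_{x_3}\pi_{\lambda,\mu}(\kappa)h(u)\}\\&-\{\Delta_{x_3}\Delta_{x_1}\pi_{\lambda,\mu}(\kappa)h(u)\}+u\{\Delta_{x_2}\Delta_{x_1}\pi_{\lambda,\mu}(\kappa)h(u)\}-\frac12\{\Delta_{x_2}\Delta_{x_1}^2\pi_{\lambda,\mu}(\kappa)h(u)\}.\end{aligned}$$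
   Context: The Engel group $\mathcal{B}_4$ is $\mathbb{R}^4$ with the law $(x_1,x_2,x_3,x_4)\circ(y_1,y_2,y_3,y_4)=(x_1+y_1,x_2+y_2,x_3+y_3-x_1y_2,x_4+y_4+\frac12x_1^2y_2-x_1y_3)$ and Haar measure the Lebesgue measure. For $\lambda\neq0$, $\mu\in\mathbb{R}$, $\pi_{\lambda,\mu}(x)h(u)=\exp\big(i(-\frac{\mu}{2\lambda}x_2+\lambda x_4-\lambda x_3u+\frac{\lambda}{2}x_2u^2)\big)h(u+x_1)$ on $L^2(\mathbb{R})$. The group Fourier transform is $\hat\kappa(\pi_{\lambda,\mu})=\pi_{\lambda,\mu}(\kappa)=\int_{\mathcal{B}_4}\kappa(x)\pi_{\lambda,\mu}(x)^*dx$; explicitly $\pi_{\lambda,\mu}(\kappa)h(u)=\int_{\mathbb{R}^4}\kappa(x)\exp\big(i(\frac{\mu}{2\lambda}x_2-\lambda x_4+\lambda x_3(u-x_1)-\frac{\lambda}{2}x_2(u-x_1)^2)\big)h(u-x_1)\,dx$. The difference operators are defined by $\Delta_{x_i}\hat\kappa(\pi_{\lambda,\mu}):=\pi_{\lambda,\mu}(x_i\kappa)$, $i=1,\dots,4$, where $x_i\kappa$ is $\kappa$ multiplied by the coordinate $x_i$; compositions act as $\Delta_{x_i}\Delta_{x_j}\pi_{\lambda,\mu}(\kappa)=\pi_{\lambda,\mu}(x_ix_j\kappa)$ and $\Delta_{x_1}^2\pi_{\lambda,\mu}(\kappa)=\pi_{\lambda,\mu}(x_1^2\kappa)$. $\partial_\lambda\{\pi_{\lambda,\mu}(\kappa)h(u)\}$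 is the derivative with respect to the parameter $\lambda$ of the function $\pi_{\lambda,\mu}(\kappa)h(u)$, and the factors $u$, $u^2$ act by multiplication after applying the operators. *)

(* Defs.v *)
From Stdlib Require Import Reals List.
From Coquelicot Require Import Coquelicot.
Open Scope R_scope.

Definition cint (f : R -> C) : C :=
  (RInt_gen (fun t => Re (f t)) (Rbar_locally m_infty) (Rbar_locally p_infty),
   RInt_gen (fun t => Im (f t)) (Rbar_locally m_infty) (Rbar_locally p_infty)).

(** Integral over R^4 (Lebesgue measure) written as an iterated integral;
    for the integrable (Schwartz-type) integrands used here this equals
    the integral over R^4 by Fubini. *)
Definition cint4 (f : R -> R -> R -> R -> C) : C :=
  cint (fun x1 => cint (fun x2 => cint (fun x3 => cint (fun x4 => f x1 x2 x3 x4)))).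

Definition expi (t : R) : C := (cos t, sin t).

Definition kernel := R -> R -> R -> R -> C.

Definition piF (lam mu : R) (kappa : kernel) (h : R -> C) (u : R) : C :=
  cint4 (fun x1 x2 x3 x4 =>
    (kappa x1 x2 x3 x4 *
     expi (mu / (2 * lam) * x2 - lam * x4 + lam * x3 * (u - x1)
           - lam / 2 * x2 * (u - x1) ^ 2)%R *
     h (u - x1)%R)%C).

Definition xmul (i : nat) (kappa : kernel) : kernel :=
  fun x1 x2 x3 x4 =>
    (RtoC (match i with 1%nat => x1 | 2%nat => x2 | 3%nat => x3 | _ => x4 end)
     * kappa x1 x2 x3 x4)%C.

Definition DeltaX (i : nat) (lam mu : R) (kappa : kernel) : (R -> C) -> R -> C :=
  piF lam mu (xmul i kappa).

Definition pderiv (i : nat) (f : R -> R -> R -> R -> R) : R -> R -> R -> R -> R :=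
  fun x1 x2 x3 x4 =>
    match i with
    | 1%nat => Derive (fun t => f t x2 x3 x4) x1
    | 2%nat => Derive (fun t => f x1 t x3 x4) x2
    | 3%nat => Derive (fun t => f x1 x2 t x4) x3
    | _ => Derive (fun t => f x1 x2 x3 t) x4
    end.

Definition pderivs (l : list nat) (f : R -> R -> R -> R -> R) :=
  fold_right pderiv f l.

Definition Schwartz4 (f : R -> R -> R -> R -> R) : Prop :=
  forall l : list nat,
    let g := pderivs l f in
    (forall x1 x2 x3 x4,
        ex_derive (fun t => g t x2 x3 x4) x1 /\
        ex_derive (fun t => g x1 t x3 x4) x2 /\
        ex_derive (fun t => g x1 x2 t x4) x3 /\
        ex_derive (fun t => g x1 x2 x3 t) x4) /\
    (forall k1 k2 k3 k4 : nat, exists M : R, forall x1 x2 x3 x4,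
        Rabs (x1 ^ k1 * x2 ^ k2 * x3 ^ k3 * x4 ^ k4 * g x1 x2 x3 x4) <= M).

Definition SchwartzC4 (kappa : kernel) : Prop :=
  Schwartz4 (fun x1 x2 x3 x4 => Re (kappa x1 x2 x3 x4)) /\
  Schwartz4 (fun x1 x2 x3 x4 => Im (kappa x1 x2 x3 x4)).

Definition Schwartz1 (f : R -> R) : Prop :=
  forall n : nat,
    (forall x, ex_derive (Derive_n f n) x) /\
    (forall k : nat, exists M : R, forall x, Rabs (x ^ k * Derive_n f n x) <= M).

Definition SchwartzC1 (h : R -> C) : Prop :=
  Schwartz1 (fun t => Re (h t)) /\ Schwartz1 (fun t => Im (h t)).

(* Main.v *)
Require Import Defs.
From Stdlib Require Import Reals.
From Coquelicot Require Import Coquelicot.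
From Stdlib Require Import Lra Lia Psatz FunctionalExtensionality List.
Open Scope R_scope.


Definition w (x : R) : R := / (1 + x ^ 2).

Lemma w_pos x : 0 < w x.
Proof. unfold w. apply Rinv_0_lt_compat. nra. Qed.

Lemma w_le1 x : w x <= 1.
Proof. unfold w. rewrite <- Rinv_1. apply Rinv_le_contravar; nra. Qed.

Notation MI := (Rbar_locally m_infty).
Notation PI' := (Rbar_locally p_infty).

Lemma atan_deriv x : is_derive atan x (w x).
Proof. apply is_derive_Reals. apply derivable_pt_lim_atan. Qed.

Lemma w_cont x : continuous w x.
Proof.
  unfold w. apply continuity_pt_filterlim.
  apply continuity_pt_inv. 2: nra.
  apply continuity_pt_plus. apply continuity_pt_const; red; auto.
  apply derivable_continuous_pt. apply derivable_pt_pow; try apply derivable_pt_id.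
Qed.

Lemma RInt_w u v : RInt w u v = atan v - atan u.
Proof.
  apply is_RInt_unique.
  apply (is_RInt_derive atan w). intros; apply atan_deriv. intros; apply w_cont.
Qed.

Lemma ex_RInt_w u v : ex_RInt w u v.
Proof. apply (ex_RInt_continuous (V:=R_CompleteNormedModule)). intros; apply w_cont. Qed.

Lemma atan_cauchy_p eps : 0 < eps -> exists N, forall u v, N < u -> N < v -> Rabs (atan u - atan v) < eps.
Proof.
  intros He.
  set (e := Rmin (eps/2) 1).
  assert (He0 : 0 < e) by (unfold e; apply Rmin_pos; lra).
  assert (He1 : e <= 1) by apply Rmin_r.
  assert (He2 : e <= eps/2) by apply Rmin_l.
  pose proof PI2_1.
  exists (tan (PI/2 - e)).
  assert (Ha : forall u, tan (PI/2 - e) < u -> PI/2 - e < atan u < PI/2).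
  { intros u Hu. split.
    - rewrite <- (atan_tan (PI/2 - e)) at 1 by lra. apply atan_increasing; auto.
    - destruct (atan_bound u); lra. }
  intros u v Hu Hv. apply Ha in Hu. apply Ha in Hv.
  apply Rabs_def1; lra.
Qed.

Lemma atan_cauchy_m eps : 0 < eps -> exists N, forall u v, u < N -> v < N -> Rabs (atan u - atan v) < eps.
Proof.
  intros He. destruct (atan_cauchy_p eps He) as [N HN].
  exists (-N). intros u v Hu Hv.
  replace (atan u - atan v) with (- (atan (-u) - atan (-v))).
  rewrite Rabs_Ropp. apply HN; lra.
  rewrite !atan_opp. ring.
Qed.

Section OneD.
Variable g : R -> R.
Variable D : R.
Hypothesis gc : forall t, continuous g t.
Hypothesis gb : forall t, Rabs (g t) <= D * w t.

Lemma D_nonneg : 0 <= D.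
Proof.
  pose proof (gb 0). pose proof (w_pos 0). pose proof (Rabs_pos (g 0)).
  destruct (Rle_or_lt 0 D); auto. nra.
Qed.

Lemma ex_RInt_g u v : ex_RInt g u v.
Proof. apply (ex_RInt_continuous (V:=R_CompleteNormedModule)). intros; apply gc. Qed.

Lemma RInt_g_bound_le u v : u <= v -> Rabs (RInt g u v) <= D * (atan v - atan u).
Proof.
  intros Huv.
  eapply Rle_trans. apply abs_RInt_le; auto. apply ex_RInt_g.
  rewrite <- RInt_w.
  replace (D * RInt w u v) with (RInt (fun x => D * w x) u v).
  2:{ apply (RInt_scal (V:=R_CompleteNormedModule) w u v D). apply ex_RInt_w. }
  apply RInt_le; [exact Huv| | |].
  - apply (ex_RInt_continuous (V:=R_CompleteNormedModule)). intros.
    apply (continuous_comp g Rabs). apply gc. apply continuous_Rabs.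
  - apply (ex_RInt_scal (V:=R_CompleteNormedModule) w). apply ex_RInt_w.
  - intros; apply gb.
Qed.

Lemma RInt_g_bound u v : Rabs (RInt g u v) <= D * Rabs (atan v - atan u).
Proof.
  pose proof D_nonneg.
  destruct (Rle_or_lt u v).
  - eapply Rle_trans. apply RInt_g_bound_le; auto.
    apply Rmult_le_compat_l; auto. apply Rle_abs.
  - rewrite <- (opp_RInt_swap (V:=R_CompleteNormedModule)) by apply ex_RInt_g.
    change (opp (RInt g v u)) with (- RInt g v u). rewrite Rabs_Ropp.
    eapply Rle_trans. apply RInt_g_bound_le; lra.
    apply Rmult_le_compat_l; auto. rewrite Rabs_minus_sym. apply Rle_abs.
Qed.

Definition Gf x := RInt g 0 x.

Lemma Gf_diff u v : Gf v - Gf u = RInt g u v.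
Proof.
  unfold Gf. rewrite <- (RInt_Chasles (V:=R_CompleteNormedModule) g 0 u v) by apply ex_RInt_g.
  unfold plus; simpl. ring.
Qed.

Lemma Gf_cauchy_bound u v : Rabs (Gf u - Gf v) <= D * Rabs (atan u - atan v).
Proof. rewrite Gf_diff. apply RInt_g_bound. Qed.

Lemma Gf_lim_p : exists l, filterlim Gf PI' (locally l).
Proof.
  apply (filterlim_locally_cauchy (F := PI')).
  intros eps. pose proof D_nonneg.
  destruct (atan_cauchy_p (eps / (D + 1))) as [N HN].
  { apply Rdiv_lt_0_compat. apply cond_pos. lra. }
  exists (fun x => N < x). split.
  - exists N. auto.
  - intros u v Hu Hv. unfold ball; simpl. unfold AbsRing_ball, abs, minus, plus, opp; simpl.
    eapply Rle_lt_trans. apply Gf_cauchy_bound.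
    specialize (HN v u Hv Hu). pose proof (cond_pos eps).
    apply Rle_lt_trans with ((D+1) * Rabs (atan v - atan u)).
    apply Rmult_le_compat_r. apply Rabs_pos. lra.
    replace (pos eps) with ((D+1) * (eps / (D+1))) by (field; lra).
    apply Rmult_lt_compat_l; lra.
Qed.

Lemma Gf_lim_m : exists l, filterlim Gf MI (locally l).
Proof.
  apply (filterlim_locally_cauchy (F := MI)).
  intros eps. pose proof D_nonneg.
  destruct (atan_cauchy_m (eps / (D + 1))) as [N HN].
  { apply Rdiv_lt_0_compat. apply cond_pos. lra. }
  exists (fun x => x < N). split.
  - exists N. auto.
  - intros u v Hu Hv. unfold ball; simpl. unfold AbsRing_ball, abs, minus, plus, opp; simpl.
    eapply Rle_lt_trans. apply Gf_cauchy_bound.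
    specialize (HN v u Hv Hu). pose proof (cond_pos eps).
    apply Rle_lt_trans with ((D+1) * Rabs (atan v - atan u)).
    apply Rmult_le_compat_r. apply Rabs_pos. lra.
    replace (pos eps) with ((D+1) * (eps / (D+1))) by (field; lra).
    apply Rmult_lt_compat_l; lra.
Qed.

Lemma Gf_derive x : is_derive Gf x (g x).
Proof.
  apply (is_derive_RInt g Gf 0 x).
  apply filter_forall. intros b. apply (RInt_correct (V:=R_CompleteNormedModule)). apply ex_RInt_g.
  apply gc.
Qed.

Lemma ex_RInt_gen_g : ex_RInt_gen g MI PI'.
Proof.
  destruct Gf_lim_p as [lb Hb]. destruct Gf_lim_m as [la Ha].
  exists (lb - la).
  apply is_RInt_gen_ext with (Derive Gf).
  apply filter_forall. intros ab x _. apply is_derive_unique. apply Gf_derive.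
  apply is_RInt_gen_Derive; auto.
  apply filter_forall. intros ab x _. eexists. apply Gf_derive.
  apply filter_forall. intros ab x _.
  eapply continuous_ext. intros y. symmetry. apply is_derive_unique. apply Gf_derive.
  apply gc.
Qed.

End OneD.

Lemma ex_RInt_gen_w : ex_RInt_gen w MI PI'.
Proof.
  apply (ex_RInt_gen_g w 1). apply w_cont.
  intros t. rewrite Rabs_pos_eq. lra. left; apply w_pos.
Qed.

Definition K := RInt_gen w MI PI'.

Lemma RInt_gen_bound g D : ex_RInt_gen g MI PI' -> (forall t, Rabs (g t) <= D * w t) ->
  Rabs (RInt_gen g MI PI') <= D * K.
Proof.
  intros He Hb.
  apply (RInt_gen_norm (Fa:=MI) (Fb:=PI') g (fun t => D * w t)).
  - apply (Filter_prod _ _ _ (fun x => x < 0) (fun x => 0 < x)).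
    + exists 0; auto.
    + exists 0; auto.
    + simpl; intros; lra.
  - apply filter_forall. intros ab x _. apply Hb.
  - apply (RInt_gen_correct (V:=R_CompleteNormedModule)); auto.
  - apply (is_RInt_gen_scal w D). apply (RInt_gen_correct (V:=R_CompleteNormedModule)). apply ex_RInt_gen_w.
Qed.

Lemma K_nonneg : 0 <= K.
Proof.
  pose proof (RInt_gen_bound w 1 ex_RInt_gen_w).
  assert (Rabs K <= 1 * K). apply H. intros; rewrite Rabs_pos_eq. lra. left; apply w_pos.
  pose proof (Rabs_pos K). lra.
Qed.

Lemma is_RInt_gen_lin f g a b lf lg : is_RInt_gen f MI PI' lf -> is_RInt_gen g MI PI' lg ->
  is_RInt_gen (fun t => a * f t + b * g t) MI PI' (a * lf + b * lg).
Proof.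
  intros Hf Hg.
  apply (is_RInt_gen_plus (V:=R_NormedModule) (fun t => a * f t) (fun t => b * g t) (a * lf) (b * lg)).
  apply (is_RInt_gen_scal (V:=R_NormedModule) f a lf Hf).
  apply (is_RInt_gen_scal (V:=R_NormedModule) g b lg Hg).
Qed.

Lemma RInt_gen_cor (f : R -> R) : ex_RInt_gen f MI PI' -> is_RInt_gen f MI PI' (RInt_gen f MI PI').
Proof. apply (RInt_gen_correct (V:=R_CompleteNormedModule) (Fa:=MI) (Fb:=PI')). Qed.

Lemma RInt_gen_lin f g a b : ex_RInt_gen f MI PI' -> ex_RInt_gen g MI PI' ->
  RInt_gen (fun t => a * f t + b * g t) MI PI' = a * RInt_gen f MI PI' + b * RInt_gen g MI PI'.
Proof.
  intros Hf Hg.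
  apply (is_RInt_gen_unique (V:=R_CompleteNormedModule)).
  apply is_RInt_gen_lin; apply RInt_gen_cor; auto.
Qed.

Lemma ex_RInt_gen_lin f g a b : ex_RInt_gen f MI PI' -> ex_RInt_gen g MI PI' ->
  ex_RInt_gen (fun t => a * f t + b * g t) MI PI'.
Proof.
  intros Hf Hg. eexists.
  apply is_RInt_gen_lin; apply RInt_gen_cor; auto.
Qed.


Definition vec := nat -> R.
Definition upd (v : vec) (j : nat) (t : R) : vec := fun i => if Nat.eqb i j then t else v i.
Definition vcons (t : R) (v : vec) : vec := fun i => match i with O => t | S k => v k end.
Definition vtl (v : vec) : vec := fun i => v (S i).

Fixpoint W (n : nat) (v : vec) : R :=
  match n with O => 1 | S n => w (v O) * W n (vtl v) end.
Fixpoint Wx (n j : nat) (v : vec) : R :=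
  match n with
  | O => 1
  | S n => match j with O => W n (vtl v) | S j => w (v O) * Wx n j (vtl v) end
  end.

Lemma W_pos n v : 0 < W n v.
Proof. revert v; induction n; intros; simpl. lra. apply Rmult_lt_0_compat. apply w_pos. apply IHn. Qed.
Lemma Wx_pos n j v : 0 < Wx n j v.
Proof. revert v j; induction n; intros; simpl. lra. destruct j. apply W_pos.
  apply Rmult_lt_0_compat. apply w_pos. apply IHn. Qed.

Definition Good (n : nat) (F : vec -> R) : Prop :=
  exists C L, (forall v, Rabs (F v) <= C * W n v) /\
    (forall j v t, (j < n)%nat -> Rabs (F v - F (upd v j t)) <= L * Rabs (v j - t) * Wx n j v).

Definition Iop (F : vec -> R) : vec -> R :=
  fun v => RInt_gen (fun t => F (vcons t v)) MI PI'.

Fixpoint Iter (n : nat) (F : vec -> R) : vec -> R :=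
  match n with O => F | S n => Iter n (Iop F) end.

Lemma upd_vcons0 t v s : upd (vcons t v) 0 s = vcons s v.
Proof. apply functional_extensionality; intros [|i]; reflexivity. Qed.

Lemma upd_vconsS t v j s : upd (vcons t v) (S j) s = vcons t (upd v j s).
Proof. apply functional_extensionality; intros [|i]; reflexivity. Qed.

Lemma vtl_vcons t v : vtl (vcons t v) = v.
Proof. reflexivity. Qed.

Lemma lip_cont (g : R -> R) L : (forall t s, Rabs (g t - g s) <= L * Rabs (t - s)) -> forall t, continuous g t.
Proof.
  intros Hl t. apply continuity_pt_filterlim. intros eps He.
  exists (eps / (Rabs L + 1)). split.
  apply Rdiv_lt_0_compat; auto. pose proof (Rabs_pos L); lra.
  intros x [_ Hx]. simpl in *. unfold R_dist in *.
  eapply Rle_lt_trans. apply Hl.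
  pose proof (Rabs_pos L). pose proof (Rabs_pos (x - t)).
  apply Rle_lt_trans with ((Rabs L + 1) * Rabs (x - t)).
  apply Rmult_le_compat_r; auto. pose proof (Rle_abs L). lra.
  replace eps with ((Rabs L + 1) * (eps / (Rabs L + 1))) by (field; lra).
  apply Rmult_lt_compat_l; lra.
Qed.

Lemma Good_sec n F v : Good (S n) F ->
  ex_RInt_gen (fun t => F (vcons t v)) MI PI'.
Proof.
  intros [C [L [Hb Hl]]].
  apply (ex_RInt_gen_g _ (C * W n v)).
  - apply (lip_cont _ (L * W n v)). intros t s.
    assert (H0 : (0 < S n)%nat) by lia. specialize (Hl 0%nat (vcons t v) s H0).
    rewrite upd_vcons0 in Hl. change (Wx (S n) 0 (vcons t v)) with (W n v) in Hl. change (vcons t v 0%nat) with t in Hl.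
    replace (L * W n v * Rabs (t - s)) with (L * Rabs (t - s) * W n v) by ring. exact Hl.
  - intros t. specialize (Hb (vcons t v)). change (W (S n) (vcons t v)) with (w t * W n v) in Hb. lra.
Qed.

Lemma Good_I n F : Good (S n) F -> Good n (Iop F).
Proof.
  intros HG. pose proof (fun v => Good_sec n F v HG) as Hex.
  destruct HG as [C [L [Hb Hl]]].
  exists (C * K), (L * K). split.
  - intros v. unfold Iop.
    replace (C * K * W n v) with ((C * W n v) * K) by ring.
    apply RInt_gen_bound. apply Hex.
    intros t. specialize (Hb (vcons t v)). change (W (S n) (vcons t v)) with (w t * W n v) in Hb. lra.
  - intros j v s Hj. unfold Iop.
    assert (E : RInt_gen (fun t => F (vcons t v)) MI PI' - RInt_gen (fun t => F (vcons t (upd v j s))) MI PI'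
      = RInt_gen (fun t => 1 * F (vcons t v) + (-1) * F (vcons t (upd v j s))) MI PI').
    { rewrite RInt_gen_lin; auto. ring. }
    rewrite E.
    replace (L * K * Rabs (v j - s) * Wx n j v) with ((L * Rabs (v j - s) * Wx n j v) * K) by ring.
    apply RInt_gen_bound. apply ex_RInt_gen_lin; apply Hex.
    intros t. assert (HSj : (S j < S n)%nat) by lia. specialize (Hl (S j) (vcons t v) s HSj).
    rewrite upd_vconsS in Hl. change (Wx (S n) (S j) (vcons t v)) with (w t * Wx n j v) in Hl. change (vcons t v (S j)) with (v j) in Hl.
    replace (1 * F (vcons t v) + -1 * F (vcons t (upd v j s))) with (F (vcons t v) - F (vcons t (upd v j s))) by ring.
    eapply Rle_trans. apply Hl. right. ring.
Qed.

Lemma Good_lin n F G a b : Good n F -> Good n G -> Good n (fun v => a * F v + b * G v).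
Proof.
  intros [C1 [L1 [Hb1 Hl1]]] [C2 [L2 [Hb2 Hl2]]].
  exists (Rabs a * C1 + Rabs b * C2), (Rabs a * L1 + Rabs b * L2). split.
  - intros v. eapply Rle_trans. apply Rabs_triang. rewrite !Rabs_mult.
    specialize (Hb1 v); specialize (Hb2 v).
    pose proof (Rabs_pos a); pose proof (Rabs_pos b).
    apply Rle_trans with (Rabs a * (C1 * W n v) + Rabs b * (C2 * W n v)).
    apply Rplus_le_compat; apply Rmult_le_compat_l; auto. right; ring.
  - intros j v t Hj.
    replace (a * F v + b * G v - (a * F (upd v j t) + b * G (upd v j t)))
      with (a * (F v - F (upd v j t)) + b * (G v - G (upd v j t))) by ring.
    eapply Rle_trans. apply Rabs_triang. rewrite !Rabs_mult.
    specialize (Hl1 j v t Hj); specialize (Hl2 j v t Hj).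
    pose proof (Rabs_pos a); pose proof (Rabs_pos b).
    apply Rle_trans with (Rabs a * (L1 * Rabs (v j - t) * Wx n j v) + Rabs b * (L2 * Rabs (v j - t) * Wx n j v)).
    apply Rplus_le_compat; apply Rmult_le_compat_l; auto. right; ring.
Qed.

Lemma Iop_lin n F G a b : Good (S n) F -> Good (S n) G ->
  Iop (fun v => a * F v + b * G v) = fun v => a * Iop F v + b * Iop G v.
Proof.
  intros HF HG. apply functional_extensionality; intros v. unfold Iop.
  apply RInt_gen_lin; eapply Good_sec; eauto.
Qed.

Lemma Iter_lin n : forall F G a b, Good n F -> Good n G ->
  forall v, Iter n (fun v => a * F v + b * G v) v = a * Iter n F v + b * Iter n G v.
Proof.
  induction n; intros F G a b HF HG v; simpl. reflexivity.
  rewrite (Iop_lin n F G a b HF HG). apply IHn; apply Good_I; auto.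
Qed.

Lemma Iter_bound n : forall F C, Good n F -> (forall v, Rabs (F v) <= C * W n v) ->
  forall v, Rabs (Iter n F v) <= C * K ^ n.
Proof.
  induction n; intros F C HF Hb v; simpl.
  - specialize (Hb v). simpl in Hb. lra.
  - replace (C * (K * K ^ n)) with ((C * K) * K ^ n) by ring.
    apply IHn. apply Good_I; auto.
    intros u. unfold Iop.
    replace (C * K * W n u) with ((C * W n u) * K) by ring.
    apply RInt_gen_bound. eapply Good_sec; eauto.
    intros t. specialize (Hb (vcons t u)). change (W (S n) (vcons t u)) with (w t * W n u) in Hb. lra.
Qed.


Lemma isd_plus (f g : R -> R) x df dg : is_derive f x df -> is_derive g x dg ->
  is_derive (fun t => f t + g t) x (df + dg).
Proof. intros. apply (is_derive_plus f g x df dg); auto. Qed.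
Lemma isd_mult (f g : R -> R) x df dg : is_derive f x df -> is_derive g x dg ->
  is_derive (fun t => f t * g t) x (df * g x + f x * dg).
Proof. intros. apply (is_derive_mult f g x df dg); auto. intros; apply Rmult_comm. Qed.
Lemma isd_scal (f : R -> R) x k df : is_derive f x df -> is_derive (fun t => k * f t) x (k * df).
Proof. intros. apply is_derive_scal; auto. Qed.
Lemma isd_comp (f g : R -> R) x df dg : is_derive f (g x) df -> is_derive g x dg ->
  is_derive (fun t => f (g t)) x (dg * df).
Proof. intros. apply (is_derive_comp f g x df dg); auto. Qed.
Lemma isd_const (a x : R) : is_derive (fun _ => a) x 0.
Proof. apply (is_derive_const (V:=R_NormedModule) a x). Qed.
Lemma isd_id (x : R) : is_derive (fun t => t) x 1.
Proof. apply (is_derive_id (K:=R_AbsRing) x). Qed.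
Lemma isd_ext (f g : R -> R) x d : (forall t, f t = g t) -> is_derive f x d -> is_derive g x d.
Proof. intros. apply (is_derive_ext f g); auto. Qed.

Lemma upd_upd x i s t : upd (upd x i s) i t = upd x i t.
Proof. apply functional_extensionality; intros k; unfold upd. destruct (Nat.eqb k i); auto. Qed.
Lemma upd_same x i : upd x i (x i) = x.
Proof. apply functional_extensionality; intros k; unfold upd. destruct (Nat.eqb k i) eqn:E; auto.
  apply Nat.eqb_eq in E. subst; auto. Qed.
Lemma upd_eq x i t : upd x i t i = t.
Proof. unfold upd. rewrite Nat.eqb_refl. auto. Qed.
Lemma upd_neq x i t k : k <> i -> upd x i t k = x k.
Proof. intros. unfold upd. apply Nat.eqb_neq in H. rewrite H. auto. Qed.

Definition rho (v : vec) : R := (1 + v 0%nat ^ 2) * (1 + v 1%nat ^ 2) * (1 + v 2%nat ^ 2) * (1 + v 3%nat ^ 2).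

Lemma rho_ge1 v : 1 <= rho v.
Proof.
  unfold rho.
  assert (forall a, 1 <= 1 + a ^ 2) by (intros; nra).
  pose proof (H (v 0%nat)); pose proof (H (v 1%nat)); pose proof (H (v 2%nat)); pose proof (H (v 3%nat)).
  assert (1 <= (1 + v 0%nat ^ 2) * (1 + v 1%nat ^ 2)) by nra.
  assert (1 <= (1 + v 0%nat ^ 2) * (1 + v 1%nat ^ 2) * (1 + v 2%nat ^ 2)) by nra.
  nra.
Qed.
Lemma rho_pos v : 0 < rho v.
Proof. pose proof (rho_ge1 v); lra. Qed.

Lemma W4_rho v : W 4 v = / rho v.
Proof.
  simpl. unfold rho, w, vtl. rewrite !Rinv_mult. ring.
Qed.

Lemma coord_le_rho v k : (k < 4)%nat -> Rabs (v k) <= rho v.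
Proof.
  intros Hk.
  assert (Ha : forall a, Rabs a <= 1 + a ^ 2).
  { intros a. destruct (Rle_or_lt 0 a); [rewrite Rabs_pos_eq|rewrite Rabs_left]; nra. }
  assert (forall a, 1 <= 1 + a ^ 2) by (intros; nra).
  pose proof (H (v 0%nat)); pose proof (H (v 1%nat)); pose proof (H (v 2%nat)); pose proof (H (v 3%nat)).
  unfold rho.
  destruct k as [|[|[|[|k]]]]; try lia.
  - pose proof (Ha (v 0%nat)).
    assert (Rabs (v 0%nat) <= (1 + v 0%nat ^ 2) * (1 + v 1%nat ^ 2)) by nra.
    assert (Rabs (v 0%nat) <= (1 + v 0%nat ^ 2) * (1 + v 1%nat ^ 2) * (1 + v 2%nat ^ 2)) by nra.
    nra.
  - pose proof (Ha (v 1%nat)).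
    assert (Rabs (v 1%nat) <= (1 + v 0%nat ^ 2) * (1 + v 1%nat ^ 2)) by nra.
    assert (Rabs (v 1%nat) <= (1 + v 0%nat ^ 2) * (1 + v 1%nat ^ 2) * (1 + v 2%nat ^ 2)) by nra.
    nra.
  - pose proof (Ha (v 2%nat)).
    assert (1 <= (1 + v 0%nat ^ 2) * (1 + v 1%nat ^ 2)) by nra.
    assert (Rabs (v 2%nat) <= (1 + v 0%nat ^ 2) * (1 + v 1%nat ^ 2) * (1 + v 2%nat ^ 2)) by nra.
    nra.
  - pose proof (Ha (v 3%nat)).
    assert (1 <= (1 + v 0%nat ^ 2) * (1 + v 1%nat ^ 2)) by nra.
    assert (1 <= (1 + v 0%nat ^ 2) * (1 + v 1%nat ^ 2) * (1 + v 2%nat ^ 2)) by nra.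
    nra.
Qed.

Lemma rho_w v : / rho v = w (v 0%nat) * w (v 1%nat) * w (v 2%nat) * w (v 3%nat).
Proof. unfold rho, w. rewrite !Rinv_mult. ring. Qed.

Lemma rho_upd_Wx x j s : (j < 4)%nat -> / rho (upd x j s) <= Wx 4 j x.
Proof.
  intros Hj. rewrite rho_w.
  pose proof (w_pos s). pose proof (w_le1 s).
  pose proof (w_pos (x 0%nat)). pose proof (w_pos (x 1%nat)). pose proof (w_pos (x 2%nat)). pose proof (w_pos (x 3%nat)).
  destruct j as [|[|[|[|j]]]]; try lia; unfold upd; simpl Nat.eqb; cbv iota.
  - change (Wx 4 0 x) with (w (x 1%nat) * (w (x 2%nat) * (w (x 3%nat) * 1))).
    assert (0 < w (x 1%nat) * w (x 2%nat) * w (x 3%nat)) by (repeat apply Rmult_lt_0_compat; auto). nra.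
  - change (Wx 4 1 x) with (w (x 0%nat) * (w (x 2%nat) * (w (x 3%nat) * 1))).
    assert (0 < w (x 0%nat) * w (x 2%nat) * w (x 3%nat)) by (repeat apply Rmult_lt_0_compat; auto). nra.
  - change (Wx 4 2 x) with (w (x 0%nat) * (w (x 1%nat) * (w (x 3%nat) * 1))).
    assert (0 < w (x 0%nat) * w (x 1%nat) * w (x 3%nat)) by (repeat apply Rmult_lt_0_compat; auto). nra.
  - change (Wx 4 3 x) with (w (x 0%nat) * (w (x 1%nat) * (w (x 2%nat) * 1))).
    assert (0 < w (x 0%nat) * w (x 1%nat) * w (x 2%nat)) by (repeat apply Rmult_lt_0_compat; auto). nra.
Qed.

Definition Cls (B : vec -> R) (f : vec -> R) : Prop :=
  exists df : nat -> vec -> R,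
    (forall i x, (i < 4)%nat -> is_derive (fun t => f (upd x i t)) (x i) (df i x)) /\
    exists C, forall x, Rabs (f x) <= C * B x /\ (forall i, (i < 4)%nat -> Rabs (df i x) <= C * B x).

Definition posf (B : vec -> R) := forall x, 0 < B x.

Lemma Cls_C_nonneg B f : posf B -> forall C, (forall x, Rabs (f x) <= C * B x) -> 0 <= C.
Proof.
  intros HB C H. specialize (H (fun _ => 0)). specialize (HB (fun _ => 0)).
  pose proof (Rabs_pos (f (fun _ => 0))).
  destruct (Rle_or_lt 0 C); auto. nra.
Qed.

Lemma Cls_lin B f g a b : posf B -> Cls B f -> Cls B g -> Cls B (fun x => a * f x + b * g x).
Proof.
  intros HB [df [Hdf [C1 H1]]] [dg [Hdg [C2 H2]]].
  exists (fun i x => a * df i x + b * dg i x). split.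
  - intros i x Hi. apply isd_plus; apply isd_scal; auto.
  - exists (Rabs a * C1 + Rabs b * C2). intros x.
    destruct (H1 x) as [H1a H1b]; destruct (H2 x) as [H2a H2b].
    pose proof (Rabs_pos a); pose proof (Rabs_pos b). pose proof (HB x).
    split.
    + eapply Rle_trans. apply Rabs_triang. rewrite !Rabs_mult.
      apply Rle_trans with (Rabs a * (C1 * B x) + Rabs b * (C2 * B x)).
      apply Rplus_le_compat; apply Rmult_le_compat_l; auto. right; ring.
    + intros i Hi. specialize (H1b i Hi); specialize (H2b i Hi).
      eapply Rle_trans. apply Rabs_triang. rewrite !Rabs_mult.
      apply Rle_trans with (Rabs a * (C1 * B x) + Rabs b * (C2 * B x)).
      apply Rplus_le_compat; apply Rmult_le_compat_l; auto. right; ring.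
Qed.

Lemma Cls_mult B1 B2 f g : posf B1 -> posf B2 -> Cls B1 f -> Cls B2 g ->
  Cls (fun x => B1 x * B2 x) (fun x => f x * g x).
Proof.
  intros HB1 HB2 [df [Hdf [C1 H1]]] [dg [Hdg [C2 H2]]].
  assert (C1p : 0 <= C1) by (apply (Cls_C_nonneg B1 f HB1); intros; apply H1).
  assert (C2p : 0 <= C2) by (apply (Cls_C_nonneg B2 g HB2); intros; apply H2).
  exists (fun i x => df i x * g x + f x * dg i x). split.
  - intros i x Hi. pose proof (isd_mult _ _ _ _ _ (Hdf i x Hi) (Hdg i x Hi)).
    cbv beta in H. rewrite upd_same in H. exact H.
  - exists (2 * C1 * C2). intros x.
    destruct (H1 x) as [H1a H1b]; destruct (H2 x) as [H2a H2b].
    pose proof (HB1 x); pose proof (HB2 x).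
    split.
    + rewrite Rabs_mult.
      apply Rle_trans with ((C1 * B1 x) * (C2 * B2 x)).
      apply Rmult_le_compat; auto using Rabs_pos.
      assert (0 <= C1 * C2 * (B1 x * B2 x)) by (apply Rmult_le_pos; nra). nra.
    + intros i Hi. specialize (H1b i Hi); specialize (H2b i Hi).
      eapply Rle_trans. apply Rabs_triang. rewrite !Rabs_mult.
      apply Rle_trans with ((C1 * B1 x) * (C2 * B2 x) + (C1 * B1 x) * (C2 * B2 x)).
      apply Rplus_le_compat; apply Rmult_le_compat; auto using Rabs_pos.
      right; ring.
Qed.

Lemma Cls_mono B B' f c : posf B -> (forall x, B x <= c * B' x) -> Cls B f -> Cls B' f.
Proof.
  intros HB Hc [df [Hdf [C H]]].
  assert (Cp : 0 <= C) by (apply (Cls_C_nonneg B f HB); intros; apply H).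
  exists df. split; auto. exists (C * c). intros x. destruct (H x) as [Ha Hb].
  specialize (Hc x). split.
  - eapply Rle_trans. apply Ha. rewrite Rmult_assoc. apply Rmult_le_compat_l; auto.
  - intros i Hi. eapply Rle_trans. apply Hb; auto. rewrite Rmult_assoc. apply Rmult_le_compat_l; auto.
Qed.

Lemma Cls_ext B f g : (forall x, f x = g x) -> Cls B f -> Cls B g.
Proof.
  intros E [df [Hdf [C H]]]. exists df. split.
  - intros i x Hi. eapply isd_ext. 2: apply Hdf; auto. intros; apply E.
  - exists C. intros x. rewrite <- E. apply H.
Qed.

Definition rpow (N : nat) (x : vec) := rho x ^ N.
Definition rdec (k : nat) (x : vec) := / rho x ^ k.

Lemma rpow_pos N : posf (rpow N).
Proof. intros x. unfold rpow. apply pow_lt. apply rho_pos. Qed.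
Lemma rdec_pos k : posf (rdec k).
Proof. intros x. unfold rdec. apply Rinv_0_lt_compat. apply pow_lt. apply rho_pos. Qed.
Lemma rpow_ge1 N x : 1 <= rpow N x.
Proof. unfold rpow. apply pow_R1_Rle. apply rho_ge1. Qed.

Lemma Cls_cos N f : Cls (rpow N) f -> Cls (rpow N) (fun x => cos (f x)).
Proof.
  intros [df [Hdf [C H]]].
  assert (Cp : 0 <= C) by (apply (Cls_C_nonneg _ f (rpow_pos N)); intros; apply H).
  exists (fun i x => df i x * - sin (f x)). split.
  - intros i x Hi. pose proof (Hdf i x Hi).
    apply (isd_comp cos (fun t => f (upd x i t))). rewrite upd_same. apply is_derive_cos. auto.
  - exists (C + 1). intros x. destruct (H x) as [Ha Hb]. pose proof (rpow_ge1 N x). split.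
    + pose proof (COS_bound (f x)). apply Rle_trans with 1. apply Rabs_le; lra. nra.
    + intros i Hi. specialize (Hb i Hi). rewrite Rabs_mult, Rabs_Ropp.
      pose proof (SIN_bound (f x)). assert (Rabs (sin (f x)) <= 1) by (apply Rabs_le; lra).
      apply Rle_trans with (Rabs (df i x) * 1). apply Rmult_le_compat_l; auto using Rabs_pos. nra.
Qed.

Lemma Cls_sin N f : Cls (rpow N) f -> Cls (rpow N) (fun x => sin (f x)).
Proof.
  intros [df [Hdf [C H]]].
  assert (Cp : 0 <= C) by (apply (Cls_C_nonneg _ f (rpow_pos N)); intros; apply H).
  exists (fun i x => df i x * cos (f x)). split.
  - intros i x Hi. pose proof (Hdf i x Hi).
    apply (isd_comp sin (fun t => f (upd x i t))). rewrite upd_same. apply is_derive_sin. auto.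
  - exists (C + 1). intros x. destruct (H x) as [Ha Hb]. pose proof (rpow_ge1 N x). split.
    + pose proof (SIN_bound (f x)). apply Rle_trans with 1. apply Rabs_le; lra. nra.
    + intros i Hi. specialize (Hb i Hi). rewrite Rabs_mult.
      pose proof (COS_bound (f x)). assert (Rabs (cos (f x)) <= 1) by (apply Rabs_le; lra).
      apply Rle_trans with (Rabs (df i x) * 1). apply Rmult_le_compat_l; auto using Rabs_pos. nra.
Qed.

Lemma Cls_const N c : Cls (rpow N) (fun _ => c).
Proof.
  exists (fun _ _ => 0). split.
  - intros; apply isd_const.
  - exists (Rabs c + 1). intros x. pose proof (rpow_ge1 N x). pose proof (Rabs_pos c). split.
    + nra.
    + intros. rewrite Rabs_R0. nra.
Qed.

Lemma Cls_proj k : (k < 4)%nat -> Cls (rpow 1) (fun x => x k).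
Proof.
  intros Hk.
  exists (fun i _ => if Nat.eqb k i then 1 else 0). split.
  - intros i x Hi. unfold upd. destruct (Nat.eqb k i) eqn:E.
    + apply Nat.eqb_eq in E; subst. apply isd_id.
    + apply isd_const.
  - exists 1. intros x. pose proof (rho_ge1 x). unfold rpow. rewrite pow_1. split.
    + rewrite Rmult_1_l. apply coord_le_rho; auto.
    + intros i Hi. destruct (Nat.eqb k i); [rewrite Rabs_R1|rewrite Rabs_R0]; lra.
Qed.

Lemma rpow_mult N M x : rpow N x * rpow M x = rpow (N + M) x.
Proof. unfold rpow. rewrite pow_add. auto. Qed.

Lemma Cls_mult_T N M f g : Cls (rpow N) f -> Cls (rpow M) g -> Cls (rpow (N + M)) (fun x => f x * g x).
Proof.
  intros Hf Hg. apply Cls_mono with (B := fun x => rpow N x * rpow M x) (c := 1). 2: intros x; cbv beta; rewrite Rmult_1_l; right; apply rpow_mult.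
  intros x; apply Rmult_lt_0_compat; apply rpow_pos.
  apply Cls_mult; auto using rpow_pos.
Qed.

Lemma Cls_mono_T N M f : (N <= M)%nat -> Cls (rpow N) f -> Cls (rpow M) f.
Proof.
  intros HNM. apply Cls_mono with 1. apply rpow_pos.
  intros x. rewrite Rmult_1_l. unfold rpow. apply Rle_pow; auto. apply rho_ge1.
Qed.

Lemma Cls_mult_DT k N f g : Cls (rdec (k + N)) f -> Cls (rpow N) g -> Cls (rdec k) (fun x => f x * g x).
Proof.
  intros Hf Hg. apply Cls_mono with (B := fun x => rdec (k + N) x * rpow N x) (c := 1).
  2:{ intros x. cbv beta. rewrite Rmult_1_l. right. unfold rdec, rpow. rewrite pow_add.
      pose proof (rho_pos x). field. split; apply pow_nonzero; lra. }
  intros x; apply Rmult_lt_0_compat. apply rdec_pos. apply rpow_pos.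
  apply Cls_mult; auto using rpow_pos, rdec_pos.
Qed.

Lemma Cls_Good f : Cls (rdec 1) f -> Good 4 f.
Proof.
  intros [df [Hdf [C H]]].
  assert (Cp : 0 <= C) by (apply (Cls_C_nonneg _ f (rdec_pos 1)); intros; apply H).
  exists C, C. split.
  - intros v. rewrite W4_rho. destruct (H v) as [Ha _]. unfold rdec in Ha. rewrite pow_1 in Ha. auto.
  - intros j v t Hj.
    destruct (MVT_gen (fun s => f (upd v j s)) (v j) t (fun s => df j (upd v j s))) as [c [Hc Heq]].
    + intros s _. pose proof (Hdf j (upd v j s) Hj).
      rewrite upd_eq in H0. eapply isd_ext. 2: exact H0. intros; simpl; rewrite upd_upd; auto.
    + intros s _. apply continuity_pt_filterlim. apply (ex_derive_continuous (V:=R_NormedModule)).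
      pose proof (Hdf j (upd v j s) Hj).
      rewrite upd_eq in H0. eexists. eapply isd_ext. 2: exact H0. intros; simpl; rewrite upd_upd; auto.
    + rewrite upd_same in Heq. rewrite <- Rabs_Ropp, Ropp_minus_distr, Heq.
      rewrite Rabs_mult. destruct (H (upd v j c)) as [_ Hb]. specialize (Hb j Hj).
      unfold rdec in Hb. rewrite pow_1 in Hb.
      pose proof (rho_upd_Wx v j c Hj).
      rewrite Rabs_minus_sym.
      apply Rle_trans with (C * Wx 4 j v * Rabs (v j - t)).
      apply Rmult_le_compat_r. apply Rabs_pos. eapply Rle_trans. apply Hb.
      apply Rmult_le_compat_l; auto. right; ring.
Qed.


Lemma pow_1pa_le a k : 0 <= a -> (1 + a) ^ k <= 2 ^ k * (1 + a ^ k).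
Proof.
  intros Ha. destruct (Rle_or_lt a 1).
  - apply Rle_trans with (2 ^ k). apply pow_incr; lra.
    pose proof (pow_le a k Ha). pose proof (pow_le 2 k ltac:(lra)). nra.
  - apply Rle_trans with ((2 * a) ^ k). apply pow_incr; lra.
    rewrite Rpow_mult_distr. pose proof (pow_le 2 k ltac:(lra)). pose proof (pow_le a k Ha). nra.
Qed.

Lemma step {X : Type} (c Y Y0 Y1 : X -> R) k :
  (forall x, Y0 x = Y x) -> (forall x, Y1 x = c x ^ (2 * k) * Y x) ->
  (exists M, forall x, Rabs (Y0 x) <= M) -> (exists M, forall x, Rabs (Y1 x) <= M) ->
  exists M, forall x, Rabs ((1 + c x ^ 2) ^ k * Y x) <= M.
Proof.
  intros E0 E1 [M0 H0] [M1 H1].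
  exists (2 ^ k * (M0 + M1)). intros x.
  specialize (H0 x); specialize (H1 x). rewrite E0 in H0. rewrite E1 in H1.
  rewrite Rabs_mult. rewrite Rabs_pos_eq by (apply pow_le; nra).
  rewrite pow_mult in H1. rewrite Rabs_mult, (Rabs_pos_eq ((c x ^ 2) ^ k)) in H1 by (apply pow_le; nra).
  pose proof (pow_1pa_le (c x ^ 2) k ltac:(nra)).
  pose proof (pow_le (c x ^ 2) k ltac:(nra)). pose proof (Rabs_pos (Y x)).
  pose proof (pow_le 2 k ltac:(lra)).
  apply Rle_trans with (2 ^ k * (1 + (c x ^ 2) ^ k) * Rabs (Y x)).
  apply Rmult_le_compat_r; auto.
  nra.
Qed.

Definition decay_clause (g : R -> R -> R -> R -> R) :=
  forall k1 k2 k3 k4 : nat, exists M : R, forall x1 x2 x3 x4,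
    Rabs (x1 ^ k1 * x2 ^ k2 * x3 ^ k3 * x4 ^ k4 * g x1 x2 x3 x4) <= M.

Lemma decay_rho g : decay_clause g -> forall k, exists C, forall v : vec,
  Rabs (g (v 3%nat) (v 2%nat) (v 1%nat) (v 0%nat)) <= C * rdec k v.
Proof.
  intros Hg k.
  set (X := (R * R * R * R)%type).
  assert (H0 : forall e1 e2 e3 e4, exists M, forall p : X,
    Rabs (fst (fst (fst p)) ^ e1 * snd (fst (fst p)) ^ e2 * snd (fst p) ^ e3 * snd p ^ e4 *
          g (fst (fst (fst p))) (snd (fst (fst p))) (snd (fst p)) (snd p)) <= M).
  { intros. destruct (Hg e1 e2 e3 e4) as [M HM]. exists M. intros [[[x1 x2] x3] x4]. apply HM. }
  set (G := fun p : X => g (fst (fst (fst p))) (snd (fst (fst p))) (snd (fst p)) (snd p)).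
  set (a1 := fun p : X => fst (fst (fst p))).
  set (a2 := fun p : X => snd (fst (fst p))).
  set (a3 := fun p : X => snd (fst p)).
  set (a4 := fun p : X => snd p).
  assert (H1 : forall e2 e3 e4, exists M, forall p : X,
    Rabs ((1 + a1 p ^ 2) ^ k * (a2 p ^ e2 * a3 p ^ e3 * a4 p ^ e4 * G p)) <= M).
  { intros. eapply step. 3: apply (H0 0%nat e2 e3 e4). 3: apply (H0 (2 * k)%nat e2 e3 e4).
    intros; unfold a1, a2, a3, a4, G; simpl; ring. intros; unfold a1, a2, a3, a4, G; simpl; ring. }
  assert (H2 : forall e3 e4, exists M, forall p : X,
    Rabs ((1 + a2 p ^ 2) ^ k * ((1 + a1 p ^ 2) ^ k * (a3 p ^ e3 * a4 p ^ e4 * G p))) <= M).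
  { intros. eapply step. 3: apply (H1 0%nat e3 e4). 3: apply (H1 (2 * k)%nat e3 e4).
    intros; simpl; ring. intros; simpl; ring. }
  assert (H3 : forall e4, exists M, forall p : X,
    Rabs ((1 + a3 p ^ 2) ^ k * ((1 + a2 p ^ 2) ^ k * ((1 + a1 p ^ 2) ^ k * (a4 p ^ e4 * G p)))) <= M).
  { intros. eapply step. 3: apply (H2 0%nat e4). 3: apply (H2 (2 * k)%nat e4).
    intros; simpl; ring. intros; simpl; ring. }
  assert (H4 : exists M, forall p : X,
    Rabs ((1 + a4 p ^ 2) ^ k * ((1 + a3 p ^ 2) ^ k * ((1 + a2 p ^ 2) ^ k * ((1 + a1 p ^ 2) ^ k * G p)))) <= M).
  { intros. eapply step. 3: apply (H3 0%nat). 3: apply (H3 (2 * k)%nat).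
    intros; simpl; ring. intros; simpl; ring. }
  destruct H4 as [M HM]. exists M. intros v.
  specialize (HM (v 3%nat, v 2%nat, v 1%nat, v 0%nat)).
  unfold a1, a2, a3, a4, G in HM; simpl in HM.
  unfold rdec, rho.
  pose proof (rho_pos v) as Hr. unfold rho in Hr.
  assert (E : Rabs (g (v 3%nat) (v 2%nat) (v 1%nat) (v 0%nat)) =
     Rabs ((1 + v 0%nat ^ 2) ^ k * ((1 + v 1%nat ^ 2) ^ k * ((1 + v 2%nat ^ 2) ^ k * ((1 + v 3%nat ^ 2) ^ k *
       g (v 3%nat) (v 2%nat) (v 1%nat) (v 0%nat))))) * / ((1 + v 0%nat ^ 2) * (1 + v 1%nat ^ 2) * (1 + v 2%nat ^ 2) * (1 + v 3%nat ^ 2)) ^ k).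
  { rewrite !Rabs_mult. rewrite !(Rabs_pos_eq ((1 + _ ^ 2) ^ k)) by (apply pow_le; nra).
    rewrite !Rpow_mult_distr. field.
    repeat split; apply pow_nonzero; nra. }
  rewrite E. apply Rmult_le_compat_r. left. apply Rinv_0_lt_compat. apply pow_lt. auto.
  auto.
Qed.


Lemma C_nonneg_rdec k (f : vec -> R) C : (forall v, Rabs (f v) <= C * rdec k v) -> 0 <= C.
Proof. intros H. apply (Cls_C_nonneg (rdec k) f (rdec_pos k) C H). Qed.

Lemma kernel_Cls g : Schwartz4 g -> forall k, Cls (rdec k) (fun v => g (v 3%nat) (v 2%nat) (v 1%nat) (v 0%nat)).
Proof.
  intros Hs k.
  destruct (Hs nil) as [Hd Hb0]. simpl in Hd, Hb0.
  destruct (decay_rho g Hb0 k) as [C0 H0].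
  destruct (Hs (1%nat :: nil)) as [_ Hb1]. simpl in Hb1. destruct (decay_rho _ Hb1 k) as [C1 H1].
  destruct (Hs (2%nat :: nil)) as [_ Hb2]. simpl in Hb2. destruct (decay_rho _ Hb2 k) as [C2 H2].
  destruct (Hs (3%nat :: nil)) as [_ Hb3]. simpl in Hb3. destruct (decay_rho _ Hb3 k) as [C3 H3].
  destruct (Hs (4%nat :: nil)) as [_ Hb4]. simpl in Hb4. destruct (decay_rho _ Hb4 k) as [C4 H4].
  pose proof (C_nonneg_rdec _ _ _ H0). pose proof (C_nonneg_rdec _ _ _ H1).
  pose proof (C_nonneg_rdec _ _ _ H2). pose proof (C_nonneg_rdec _ _ _ H3).
  pose proof (C_nonneg_rdec _ _ _ H4).
  exists (fun i v => match i with
    | 0%nat => pderiv 4 g (v 3%nat) (v 2%nat) (v 1%nat) (v 0%nat)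
    | 1%nat => pderiv 3 g (v 3%nat) (v 2%nat) (v 1%nat) (v 0%nat)
    | 2%nat => pderiv 2 g (v 3%nat) (v 2%nat) (v 1%nat) (v 0%nat)
    | 3%nat => pderiv 1 g (v 3%nat) (v 2%nat) (v 1%nat) (v 0%nat)
    | _ => 0 end). split.
  - intros i x Hi. destruct (Hd (x 3%nat) (x 2%nat) (x 1%nat) (x 0%nat)) as [D1 [D2 [D3 D4]]].
    destruct i as [|[|[|[|i]]]]; try lia; unfold upd; simpl; apply Derive_correct; auto.
  - exists (C0 + C1 + C2 + C3 + C4). intros v. pose proof (rdec_pos k v). split.
    + eapply Rle_trans. apply H0. apply Rmult_le_compat_r; lra.
    + intros i Hi. destruct i as [|[|[|[|i]]]]; try lia.
      * eapply Rle_trans. apply H4. apply Rmult_le_compat_r; lra.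
      * eapply Rle_trans. apply H3. apply Rmult_le_compat_r; lra.
      * eapply Rle_trans. apply H2. apply Rmult_le_compat_r; lra.
      * eapply Rle_trans. apply H1. apply Rmult_le_compat_r; lra.
Qed.

Lemma h_Cls (f : R -> R) u : Schwartz1 f -> Cls (rpow 0) (fun v => f (u - v 3%nat)).
Proof.
  intros Hs.
  destruct (Hs 0%nat) as [Hd0 Hb0]. destruct (Hb0 0%nat) as [M0 HM0].
  destruct (Hs 1%nat) as [_ Hb1]. destruct (Hb1 0%nat) as [M1 HM1].
  simpl in Hd0, HM0, HM1.
  exists (fun i v => if Nat.eqb i 3 then -1 * Derive f (u - v 3%nat) else 0). split.
  - intros i x Hi. destruct (Nat.eqb i 3) eqn:E.
    + apply Nat.eqb_eq in E; subst. unfold upd; simpl.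
      apply (isd_comp f (fun t => u - t)).
      apply Derive_correct. apply Hd0.
      pose proof (isd_plus (fun _ => u) (fun t => -1 * t) (x 3%nat) 0 (-1 * 1) (isd_const u _) (isd_scal _ _ (-1) _ (isd_id _))) as HH.
      replace (0 + -1 * 1) with (-1) in HH by ring.
      eapply isd_ext. 2: exact HH. intros; simpl; ring.
    + apply Nat.eqb_neq in E. eapply isd_ext. 2: apply (isd_const (f (u - x 3%nat))).
      intros t. simpl. rewrite upd_neq; auto.
  - exists (Rabs M0 + Rabs M1 + 1). intros v. unfold rpow. simpl. rewrite Rmult_1_r.
    pose proof (Rle_abs M0). pose proof (Rle_abs M1). pose proof (Rabs_pos M0). pose proof (Rabs_pos M1).
    split.
    + specialize (HM0 (u - v 3%nat)). rewrite Rmult_1_l in HM0. lra.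
    + intros i Hi. destruct (Nat.eqb i 3).
      * specialize (HM1 (u - v 3%nat)). rewrite Rmult_1_l in HM1.
        rewrite Rabs_mult. replace (Rabs (-1)) with 1 by (rewrite Rabs_left; lra). rewrite Rmult_1_l. eapply Rle_trans; [exact HM1|lra].
      * rewrite Rabs_R0. lra.
Qed.

Definition kv (k' : kernel) (v : vec) : C := k' (v 3%nat) (v 2%nat) (v 1%nat) (v 0%nat).

Definition CD k (A : vec -> C) := Cls (rdec k) (fun v => Re (A v)) /\ Cls (rdec k) (fun v => Im (A v)).
Definition CT N (A : vec -> C) := Cls (rpow N) (fun v => Re (A v)) /\ Cls (rpow N) (fun v => Im (A v)).
Definition NiceK (k' : kernel) := forall k, CD k (kv k').

Lemma kappa_nice kappa : SchwartzC4 kappa -> NiceK kappa.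
Proof.
  intros [Hr Hi] k. split.
  - apply (kernel_Cls _ Hr k).
  - apply (kernel_Cls _ Hi k).
Qed.

Lemma Cls_sub B f g : posf B -> Cls B f -> Cls B g -> Cls B (fun x => f x - g x).
Proof.
  intros HB Hf Hg. eapply Cls_ext. 2: apply (Cls_lin B f g 1 (-1)); auto. intros; simpl; ring.
Qed.
Lemma Cls_add B f g : posf B -> Cls B f -> Cls B g -> Cls B (fun x => f x + g x).
Proof.
  intros HB Hf Hg. eapply Cls_ext. 2: apply (Cls_lin B f g 1 1); auto. intros; simpl; ring.
Qed.
Lemma Cls_scal B f a : posf B -> Cls B f -> Cls B (fun x => a * f x).
Proof.
  intros HB Hf. eapply Cls_ext. 2: apply (Cls_lin B f f a 0); auto. intros; simpl; ring.
Qed.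

Lemma CD_mult k N A B : CD (k + N) A -> CT N B -> CD k (fun v => (A v * B v)%C).
Proof.
  intros [HAr HAi] [HBr HBi]. split.
  - eapply Cls_ext. 2: apply Cls_sub. 2: apply rdec_pos.
    2: apply (Cls_mult_DT k N _ _ HAr HBr). 2: apply (Cls_mult_DT k N _ _ HAi HBi).
    intros v; unfold Re, Im; simpl; ring.
  - eapply Cls_ext. 2: apply Cls_add. 2: apply rdec_pos.
    2: apply (Cls_mult_DT k N _ _ HAr HBi). 2: apply (Cls_mult_DT k N _ _ HAi HBr).
    intros v; unfold Re, Im; simpl; ring.
Qed.

Lemma CT_mult N M A B : CT N A -> CT M B -> CT (N + M) (fun v => (A v * B v)%C).
Proof.
  intros [HAr HAi] [HBr HBi]. split.
  - eapply Cls_ext. 2: apply Cls_sub. 2: apply rpow_pos.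
    2: apply (Cls_mult_T N M _ _ HAr HBr). 2: apply (Cls_mult_T N M _ _ HAi HBi).
    intros v; unfold Re, Im; simpl; ring.
  - eapply Cls_ext. 2: apply Cls_add. 2: apply rpow_pos.
    2: apply (Cls_mult_T N M _ _ HAr HBi). 2: apply (Cls_mult_T N M _ _ HAi HBr).
    intros v; unfold Re, Im; simpl; ring.
Qed.

Lemma CT_expi N f : Cls (rpow N) f -> CT N (fun v => expi (f v)).
Proof. intros H. split. apply Cls_cos; auto. apply Cls_sin; auto. Qed.

Lemma CT_RtoC N f : Cls (rpow N) f -> CT N (fun v => RtoC (f v)).
Proof. intros H. split. auto. eapply Cls_ext. 2: apply (Cls_const N 0). intros; reflexivity. Qed.

Lemma CT_const N c : CT N (fun _ => c).
Proof. split; eapply Cls_ext; try apply Cls_const; intros; reflexivity. Qed.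

Lemma CT_h h u : SchwartzC1 h -> CT 0 (fun v => h (u - v 3%nat)).
Proof. intros [Hr Hi]. split. apply (h_Cls _ u Hr). apply (h_Cls _ u Hi). Qed.

Lemma CD_Good A : CD 1 A -> Good 4 (fun v => Re (A v)) /\ Good 4 (fun v => Im (A v)).
Proof. intros [H1 H2]. split; apply Cls_Good; auto. Qed.

Lemma NiceK_xmul_gen k' (c : nat) (p : R -> R -> R -> R -> R) :
  (c < 4)%nat -> (forall x1 x2 x3 x4, p x1 x2 x3 x4 = (fun v : vec => v c) (fun i => match i with 0%nat => x4 | 1%nat => x3 | 2%nat => x2 | _ => x1 end)) ->
  NiceK k' -> NiceK (fun x1 x2 x3 x4 => (RtoC (p x1 x2 x3 x4) * k' x1 x2 x3 x4)%C).
Proof.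
  intros Hc Hp Hk k.
  assert (E : forall v : vec, p (v 3%nat) (v 2%nat) (v 1%nat) (v 0%nat) = v c).
  { intros v. rewrite Hp. simpl. destruct c as [|[|[|[|c]]]]; try lia; reflexivity. }
  assert (HT : CT 1 (fun v => RtoC (v c))) by (apply CT_RtoC; apply Cls_proj; auto).
  pose proof (CD_mult k 1 (kv k') (fun v => RtoC (v c)) (Hk (k + 1)%nat) HT) as [H1 H2].
  split.
  - eapply Cls_ext. 2: exact H1. intros v; unfold kv; simpl. rewrite E. ring.
  - eapply Cls_ext. 2: exact H2. intros v; unfold kv; simpl. rewrite E. ring.
Qed.

Lemma NiceK_xmul i k' : (1 <= i <= 4)%nat -> NiceK k' -> NiceK (xmul i k').
Proof.
  intros Hi Hk. unfold xmul.
  destruct i as [|[|[|[|[|i]]]]]; try lia.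
  - apply (NiceK_xmul_gen k' 3%nat); auto.
  - apply (NiceK_xmul_gen k' 2%nat); auto.
  - apply (NiceK_xmul_gen k' 1%nat); auto.
  - apply (NiceK_xmul_gen k' 0%nat); auto.
Qed.

Definition Qp (u a b c d : R) (v : vec) : R :=
  a * v 2%nat + b * v 0%nat + c * v 1%nat * (u - v 3%nat) + d * v 2%nat * (u - v 3%nat) ^ 2.

Lemma Qp_Cls u a b c d : Cls (rpow 3) (Qp u a b c d).
Proof.
  assert (Hu : Cls (rpow 1) (fun v => u - v 3%nat)).
  { apply Cls_sub. apply rpow_pos. apply Cls_const. apply Cls_proj; lia. }
  assert (P1 : Cls (rpow 3) (fun v => a * v 2%nat)).
  { apply Cls_scal. apply rpow_pos. apply (Cls_mono_T 1). lia. apply Cls_proj; lia. }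
  assert (P2 : Cls (rpow 3) (fun v => b * v 0%nat)).
  { apply Cls_scal. apply rpow_pos. apply (Cls_mono_T 1). lia. apply Cls_proj; lia. }
  assert (P3 : Cls (rpow 3) (fun v => c * (v 1%nat * (u - v 3%nat)))).
  { apply Cls_scal. apply rpow_pos. apply (Cls_mono_T 2). lia.
    apply (Cls_mult_T 1 1). apply Cls_proj; lia. auto. }
  assert (P4 : Cls (rpow 3) (fun v => d * (v 2%nat * (u - v 3%nat) * (u - v 3%nat)))).
  { apply Cls_scal. apply rpow_pos.
    apply (Cls_mult_T 2 1 (fun v => v 2%nat * (u - v 3%nat))). apply (Cls_mult_T 1 1). apply Cls_proj; lia. auto. auto. }
  eapply Cls_ext. 2: apply Cls_add. 2: apply rpow_pos. 2: apply Cls_add. 2: apply rpow_pos.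
  2: apply Cls_add. 2: apply rpow_pos. 2: exact P1. 2: exact P2. 2: exact P3. 2: exact P4.
  intros v; unfold Qp; simpl; ring.
Qed.


Definition RV (f : kernel) (v : vec) : R := Re (f (v 3%nat) (v 2%nat) (v 1%nat) (v 0%nat)).
Definition IV (f : kernel) (v : vec) : R := Im (f (v 3%nat) (v 2%nat) (v 1%nat) (v 0%nat)).
Definition v0 : vec := fun _ => 0.

Lemma cint4_Re f : Re (cint4 f) = Iter 4 (RV f) v0.
Proof. reflexivity. Qed.
Lemma cint4_Im f : Im (cint4 f) = Iter 4 (IV f) v0.
Proof. reflexivity. Qed.

Definition CGood (f : kernel) := Good 4 (RV f) /\ Good 4 (IV f).

Lemma Good_ext n F G : (forall v, F v = G v) -> Good n F -> Good n G.
Proof. intros E H. replace G with F; auto. apply functional_extensionality; auto. Qed.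

Lemma Iter_ext n F G : (forall v, F v = G v) -> forall v, Iter n F v = Iter n G v.
Proof. intros E v. replace G with F; auto. apply functional_extensionality; auto. Qed.

Lemma Iter_lin4 n F1 F2 F3 F4 a1 a2 a3 a4 : Good n F1 -> Good n F2 -> Good n F3 -> Good n F4 ->
  forall v, Iter n (fun v => a1 * F1 v + a2 * F2 v + a3 * F3 v + a4 * F4 v) v =
    a1 * Iter n F1 v + a2 * Iter n F2 v + a3 * Iter n F3 v + a4 * Iter n F4 v.
Proof.
  intros H1 H2 H3 H4 v.
  rewrite (Iter_ext n _ (fun v => 1 * (a1 * F1 v + a2 * F2 v) + 1 * (a3 * F3 v + a4 * F4 v))).
  2: intros; ring.
  rewrite Iter_lin by (apply Good_lin; auto).
  rewrite !Iter_lin by auto. ring.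
Qed.

Lemma Good_lin4 n F1 F2 F3 F4 a1 a2 a3 a4 : Good n F1 -> Good n F2 -> Good n F3 -> Good n F4 ->
  Good n (fun v => a1 * F1 v + a2 * F2 v + a3 * F3 v + a4 * F4 v).
Proof.
  intros H1 H2 H3 H4.
  eapply Good_ext with (F := fun v => 1 * (a1 * F1 v + a2 * F2 v) + 1 * (a3 * F3 v + a4 * F4 v)).
  intros; ring.
  apply Good_lin; apply Good_lin; auto.
Qed.

Definition klin (a b : C) (f g : kernel) : kernel :=
  fun x1 x2 x3 x4 => (a * f x1 x2 x3 x4 + b * g x1 x2 x3 x4)%C.

Lemma RV_klin a b f g v : RV (klin a b f g) v =
  Re a * RV f v + (- Im a) * IV f v + Re b * RV g v + (- Im b) * IV g v.
Proof. unfold RV, IV, klin, Re, Im. simpl. ring. Qed.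
Lemma IV_klin a b f g v : IV (klin a b f g) v =
  Im a * RV f v + Re a * IV f v + Im b * RV g v + Re b * IV g v.
Proof. unfold RV, IV, klin, Re, Im. simpl. ring. Qed.

Lemma CGood_lin a b f g : CGood f -> CGood g -> CGood (klin a b f g).
Proof.
  intros [Hf1 Hf2] [Hg1 Hg2]. split.
  - eapply Good_ext. intros v; symmetry; apply RV_klin. apply Good_lin4; auto.
  - eapply Good_ext. intros v; symmetry; apply IV_klin. apply Good_lin4; auto.
Qed.

Lemma cint4_lin a b f g : CGood f -> CGood g -> cint4 (klin a b f g) = (a * cint4 f + b * cint4 g)%C.
Proof.
  intros [Hf1 Hf2] [Hg1 Hg2].
  apply injective_projections.
  - change (fst (cint4 (klin a b f g))) with (Re (cint4 (klin a b f g))).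
    rewrite cint4_Re. rewrite (Iter_ext 4 _ _ (RV_klin a b f g)).
    rewrite Iter_lin4 by auto. rewrite <- !cint4_Re, <- !cint4_Im. unfold Re, Im. simpl. ring.
  - change (snd (cint4 (klin a b f g))) with (Im (cint4 (klin a b f g))).
    rewrite cint4_Im. rewrite (Iter_ext 4 _ _ (IV_klin a b f g)).
    rewrite Iter_lin4 by auto. rewrite <- !cint4_Re, <- !cint4_Im. unfold Re, Im. simpl. ring.
Qed.


Definition phs (mu u l x1 x2 x3 x4 : R) : R :=
  mu / (2 * l) * x2 - l * x4 + l * x3 * (u - x1) - l / 2 * x2 * (u - x1) ^ 2.
Definition pphi (mu u l x1 x2 x3 x4 : R) : R :=
  - (mu / (2 * l ^ 2)) * x2 - x4 + x3 * (u - x1) - 1 / 2 * x2 * (u - x1) ^ 2.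

Definition Fint (mu : R) (h : R -> C) (u : R) (k' : kernel) (l : R) : kernel :=
  fun x1 x2 x3 x4 => (k' x1 x2 x3 x4 * expi (phs mu u l x1 x2 x3 x4) * h (u - x1)%R)%C.
Definition dFint (mu : R) (h : R -> C) (u : R) (k' : kernel) (l : R) : kernel :=
  fun x1 x2 x3 x4 => (Fint mu h u k' l x1 x2 x3 x4 * (Ci * RtoC (pphi mu u l x1 x2 x3 x4)))%C.

Lemma piF_Fint l mu k' h u : piF l mu k' h u = cint4 (Fint mu h u k' l).
Proof. reflexivity. Qed.

Lemma phs_Cls mu u l : Cls (rpow 3) (fun v => phs mu u l (v 3%nat) (v 2%nat) (v 1%nat) (v 0%nat)).
Proof.
  eapply Cls_ext. 2: apply (Qp_Cls u (mu / (2 * l)) (- l) l (- (l / 2))).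
  intros v; unfold Qp, phs; ring.
Qed.
Lemma pphi_Cls mu u l : Cls (rpow 3) (fun v => pphi mu u l (v 3%nat) (v 2%nat) (v 1%nat) (v 0%nat)).
Proof.
  eapply Cls_ext. 2: apply (Qp_Cls u (- (mu / (2 * l ^ 2))) (-1) 1 (- (1 / 2))).
  intros v; unfold Qp, pphi; ring.
Qed.

Lemma Fint_CD mu h u k' l : NiceK k' -> SchwartzC1 h ->
  forall k, CD k (fun v => Fint mu h u k' l (v 3%nat) (v 2%nat) (v 1%nat) (v 0%nat)).
Proof.
  intros Hk Hh k.
  apply (CD_mult k 0 (fun v => kv k' v * expi (phs mu u l (v 3%nat) (v 2%nat) (v 1%nat) (v 0%nat)))%C
                     (fun v => h (u - v 3%nat))).
  - apply (CD_mult (k + 0) 3). apply Hk. apply CT_expi. apply phs_Cls.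
  - apply CT_h; auto.
Qed.

Lemma dFint_CD mu h u k' l : NiceK k' -> SchwartzC1 h ->
  forall k, CD k (fun v => dFint mu h u k' l (v 3%nat) (v 2%nat) (v 1%nat) (v 0%nat)).
Proof.
  intros Hk Hh k.
  apply (CD_mult k 3 (fun v => Fint mu h u k' l (v 3%nat) (v 2%nat) (v 1%nat) (v 0%nat))
    (fun v => Ci * RtoC (pphi mu u l (v 3%nat) (v 2%nat) (v 1%nat) (v 0%nat)))%C).
  - apply Fint_CD; auto.
  - apply (CT_mult 0 3). apply CT_const. apply CT_RtoC. apply pphi_Cls.
Qed.

Lemma CD_CGood (f : kernel) : CD 1 (fun v => f (v 3%nat) (v 2%nat) (v 1%nat) (v 0%nat)) -> CGood f.
Proof. intros H. apply CD_Good in H. exact H. Qed.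

Lemma Fint_CGood mu h u k' l : NiceK k' -> SchwartzC1 h -> CGood (Fint mu h u k' l).
Proof. intros. apply CD_CGood. apply Fint_CD; auto. Qed.
Lemma dFint_CGood mu h u k' l : NiceK k' -> SchwartzC1 h -> CGood (dFint mu h u k' l).
Proof. intros. apply CD_CGood. apply dFint_CD; auto. Qed.

Lemma kernel_eq (f g : kernel) : (forall x1 x2 x3 x4, f x1 x2 x3 x4 = g x1 x2 x3 x4) -> f = g.
Proof.
  intros H. apply functional_extensionality; intros x1. apply functional_extensionality; intros x2.
  apply functional_extensionality; intros x3. apply functional_extensionality; intros x4. apply H.
Qed.

Lemma identity kappa h lam mu u : SchwartzC4 kappa -> SchwartzC1 h -> lam <> 0 ->
  DeltaX 4%nat lam mu kappa h u =
      (Ci * cint4 (dFint mu h u kappa lam)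
       - RtoC (mu / (2 * lam ^ 2) + u ^ 2 / 2) * DeltaX 2%nat lam mu kappa h u
       + RtoC u * DeltaX 3%nat lam mu kappa h u
       - piF lam mu (xmul 3%nat (xmul 1%nat kappa)) h u
       + RtoC u * piF lam mu (xmul 2%nat (xmul 1%nat kappa)) h u
       - RtoC (1 / 2) * piF lam mu (xmul 2%nat (xmul 1%nat (xmul 1%nat kappa))) h u)%C.
Proof.
  intros Hk Hh Hl.
  pose proof (kappa_nice kappa Hk) as N0.
  assert (N1 : NiceK (xmul 1 kappa)) by (apply NiceK_xmul; auto; lia).
  assert (N2 : NiceK (xmul 2 kappa)) by (apply NiceK_xmul; auto; lia).
  assert (N3 : NiceK (xmul 3 kappa)) by (apply NiceK_xmul; auto; lia).
  assert (N31 : NiceK (xmul 3 (xmul 1 kappa))) by (apply NiceK_xmul; auto; lia).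
  assert (N21 : NiceK (xmul 2 (xmul 1 kappa))) by (apply NiceK_xmul; auto; lia).
  assert (N11 : NiceK (xmul 1 (xmul 1 kappa))) by (apply NiceK_xmul; auto; lia).
  assert (N211 : NiceK (xmul 2 (xmul 1 (xmul 1 kappa)))) by (apply NiceK_xmul; auto; lia).
  unfold DeltaX. rewrite !piF_Fint.
  set (fD := dFint mu h u kappa lam).
  set (f2 := Fint mu h u (xmul 2 kappa) lam).
  set (f3 := Fint mu h u (xmul 3 kappa) lam).
  set (f31 := Fint mu h u (xmul 3 (xmul 1 kappa)) lam).
  set (f21 := Fint mu h u (xmul 2 (xmul 1 kappa)) lam).
  set (f211 := Fint mu h u (xmul 2 (xmul 1 (xmul 1 kappa))) lam).
  assert (GD : CGood fD) by (apply dFint_CGood; auto).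
  assert (G2 : CGood f2) by (apply Fint_CGood; auto).
  assert (G3 : CGood f3) by (apply Fint_CGood; auto).
  assert (G31 : CGood f31) by (apply Fint_CGood; auto).
  assert (G21 : CGood f21) by (apply Fint_CGood; auto).
  assert (G211 : CGood f211) by (apply Fint_CGood; auto).
  set (c2 := RtoC (mu / (2 * lam ^ 2) + u ^ 2 / 2)).
  set (g1 := klin Ci (- c2)%C fD f2).
  set (g2 := klin 1%R (RtoC u) g1 f3).
  set (g3 := klin 1%R (-1)%R g2 f31).
  set (g4 := klin 1%R (RtoC u) g3 f21).
  set (g5 := klin 1%R (RtoC (- (1/2))) g4 f211).
  assert (H1 : CGood g1) by (apply CGood_lin; auto).
  assert (H2 : CGood g2) by (apply CGood_lin; auto).
  assert (H3 : CGood g3) by (apply CGood_lin; auto).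
  assert (H4 : CGood g4) by (apply CGood_lin; auto).
  assert (E : (Ci * cint4 fD - c2 * cint4 f2 + RtoC u * cint4 f3 - cint4 f31 + RtoC u * cint4 f21
               - RtoC (1 / 2) * cint4 f211)%C = cint4 g5).
  { unfold g5, g4, g3, g2, g1.
    rewrite !cint4_lin by auto.
    apply injective_projections; simpl; ring. }
  rewrite E. f_equal.
  apply kernel_eq. intros x1 x2 x3 x4.
  unfold g5, g4, g3, g2, g1, klin, fD, f2, f3, f31, f21, f211, dFint, Fint, xmul, c2, phs, pphi.
  apply injective_projections; simpl; field; auto.
Qed.


Lemma abs_sin_le x : Rabs (sin x) <= Rabs x.
Proof.
  assert (Hp : forall y, 0 <= y -> Rabs (sin y) <= y).
  { intros y Hy. destruct (Req_dec y 0) as [->|Hy0]. rewrite sin_0, Rabs_R0; lra.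
    pose proof (sin_lt_x y ltac:(lra)).
    apply Rabs_le. split; [|lra].
    pose proof PI2_1. destruct (Rle_or_lt y PI).
    - pose proof (sin_ge_0 y Hy H1). lra.
    - pose proof (SIN_bound y). lra. }
  destruct (Rle_or_lt 0 x).
  - rewrite (Rabs_pos_eq x) by lra. auto.
  - rewrite (Rabs_left x) by lra. rewrite <- (Ropp_involutive x) at 1. rewrite sin_neg, Rabs_Ropp.
    apply Hp. lra.
Qed.

Lemma cos_m1 t : Rabs (cos t - 1) <= t ^ 2.
Proof.
  destruct (MVT_gen cos 0 t (fun x => - sin x)) as [c [Hc Heq]].
  - intros; apply is_derive_cos.
  - intros; apply continuity_cos.
  - rewrite cos_0 in Heq. rewrite Heq. rewrite Rabs_mult, Rabs_Ropp.
    pose proof (abs_sin_le c).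
    assert (Rabs c <= Rabs t).
    { unfold Rmin, Rmax in Hc. destruct (Rle_dec 0 t); apply Rabs_le; split;
      try (rewrite Rabs_pos_eq by lra; lra); try (rewrite Rabs_left by lra; lra). }
    replace (t - 0) with t by ring.
    rewrite <- (pow2_abs t). simpl. rewrite Rmult_1_r.
    apply Rmult_le_compat_r. apply Rabs_pos. lra.
Qed.

Lemma sin_mx t : Rabs (sin t - t) <= 2 * t ^ 2.
Proof.
  destruct (MVT_gen (fun x => sin x - x) 0 t (fun x => cos x - 1)) as [c [Hc Heq]].
  - intros x _.
    pose proof (isd_plus sin (fun x => -1 * x) x (cos x) (-1*1) (is_derive_sin x) (isd_scal _ _ (-1) _ (isd_id x))) as HH.
    replace (cos x + -1*1) with (cos x - 1) in HH by ring.
    eapply isd_ext; [|exact HH]. intros; simpl; ring.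
  - intros. apply continuity_pt_minus. apply continuity_sin.
    apply derivable_continuous_pt, derivable_pt_id.
  - rewrite sin_0 in Heq. replace (sin t - t) with (sin t - t - (0 - 0)) by ring.
    rewrite Heq. replace (t - 0) with t by ring. rewrite Rabs_mult.
    pose proof (cos_m1 c). pose proof (COS_bound c).
    assert (Rabs c <= Rabs t).
    { unfold Rmin, Rmax in Hc. destruct (Rle_dec 0 t); apply Rabs_le; split;
      try (rewrite Rabs_pos_eq by lra; lra); try (rewrite Rabs_left by lra; lra). }
    assert (Hc2 : c ^ 2 <= t ^ 2). { rewrite <- (pow2_abs c), <- (pow2_abs t). pose proof (Rabs_pos c). nra. }
    assert (Rabs (cos c - 1) <= 2) by (apply Rabs_le; lra).
    pose proof (Rabs_pos t). pose proof (Rabs_pos (cos c - 1)).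
    rewrite <- (pow2_abs t). destruct (Rle_or_lt (Rabs t) 1).
    + assert (Rabs (cos c - 1) <= Rabs t ^ 2) by (rewrite pow2_abs; lra).
      apply Rle_trans with (Rabs t ^ 2 * Rabs t). apply Rmult_le_compat_r; auto.
      nra.
    + apply Rle_trans with (2 * Rabs t). apply Rmult_le_compat_r; auto. nra.
Qed.

Lemma trig_cos a th q : Rabs (cos (a + th) - cos a + q * sin a) <= 3 * th ^ 2 + Rabs (th - q).
Proof.
  rewrite cos_plus.
  replace (cos a * cos th - sin a * sin th - cos a + q * sin a)
    with (cos a * (cos th - 1) + - sin a * ((sin th - th) + (th - q))) by ring.
  pose proof (COS_bound a). pose proof (SIN_bound a).
  assert (Rabs (cos a) <= 1) by (apply Rabs_le; lra).
  assert (Rabs (sin a) <= 1) by (apply Rabs_le; lra).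
  pose proof (cos_m1 th). pose proof (sin_mx th).
  eapply Rle_trans. apply Rabs_triang.
  rewrite !Rabs_mult, Rabs_Ropp.
  pose proof (Rabs_triang (sin th - th) (th - q)).
  pose proof (Rabs_pos (cos th - 1)). pose proof (Rabs_pos (sin th - th + (th - q))).
  apply Rle_trans with (1 * Rabs (cos th - 1) + 1 * Rabs (sin th - th + (th - q))).
  apply Rplus_le_compat; apply Rmult_le_compat_r; auto.
  lra.
Qed.

Lemma trig_sin a th q : Rabs (sin (a + th) - sin a - q * cos a) <= 3 * th ^ 2 + Rabs (th - q).
Proof.
  rewrite sin_plus.
  replace (sin a * cos th + cos a * sin th - sin a - q * cos a)
    with (sin a * (cos th - 1) + cos a * ((sin th - th) + (th - q))) by ring.
  pose proof (COS_bound a). pose proof (SIN_bound a).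
  assert (Rabs (cos a) <= 1) by (apply Rabs_le; lra).
  assert (Rabs (sin a) <= 1) by (apply Rabs_le; lra).
  pose proof (cos_m1 th). pose proof (sin_mx th).
  eapply Rle_trans. apply Rabs_triang.
  rewrite !Rabs_mult.
  pose proof (Rabs_triang (sin th - th) (th - q)).
  pose proof (Rabs_pos (cos th - 1)). pose proof (Rabs_pos (sin th - th + (th - q))).
  apply Rle_trans with (1 * Rabs (cos th - 1) + 1 * Rabs (sin th - th + (th - q))).
  apply Rplus_le_compat; apply Rmult_le_compat_r; auto.
  lra.
Qed.


Lemma phase_diff mu u lam d x1 x2 x3 x4 : lam <> 0 -> lam + d <> 0 ->
  phs mu u (lam + d) x1 x2 x3 x4 - phs mu u lam x1 x2 x3 x4 - d * pphi mu u lam x1 x2 x3 x4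
  = mu * x2 / 2 * (d ^ 2 / (lam ^ 2 * (lam + d))).
Proof. intros. unfold phs, pphi. field. auto. Qed.

Lemma brk lam d mu x2 p R0 Cp : lam <> 0 -> Rabs d <= Rabs lam / 2 -> 1 <= R0 -> Rabs x2 <= R0 ->
  0 <= Cp -> Rabs p <= Cp * R0 ^ 3 ->
  3 * (d * p + mu * x2 / 2 * (d ^ 2 / (lam ^ 2 * (lam + d)))) ^ 2 + Rabs (mu * x2 / 2 * (d ^ 2 / (lam ^ 2 * (lam + d))))
  <= d ^ 2 * ((6 * Cp ^ 2 + 2 * (Rabs mu / Rabs lam ^ 3) ^ 2 * lam ^ 2 + Rabs mu / Rabs lam ^ 3) * R0 ^ 6).
Proof.
  intros Hl Hd HR Hx HC Hp.
  set (L := Rabs lam). assert (HL : 0 < L) by (apply Rabs_pos_lt; auto).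
  assert (Hld : L / 2 <= Rabs (lam + d)).
  { pose proof (Rabs_triang_inv lam (- d)). replace (lam - - d) with (lam + d) in H by ring.
    rewrite Rabs_Ropp in H. unfold L. lra. }
  assert (Hld0 : lam + d <> 0). { intro E. rewrite E, Rabs_R0 in Hld. lra. }
  set (r := mu * x2 / 2 * (d ^ 2 / (lam ^ 2 * (lam + d)))).
  set (m := Rabs mu / L ^ 3).
  assert (Hm : 0 <= m) by (unfold m; apply Rdiv_le_0_compat; [apply Rabs_pos | apply pow_lt; auto]).
  assert (Er : r * (2 * (lam ^ 2 * (lam + d))) = mu * x2 * d ^ 2) by (unfold r; field; auto).
  assert (Hr : Rabs r <= m * R0 * d ^ 2).
  { assert (E2 : Rabs r * (2 * (L ^ 2 * Rabs (lam + d))) = Rabs mu * Rabs x2 * d ^ 2).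
    { rewrite <- (Rabs_pos_eq 2) by lra. unfold L. rewrite RPow_abs.
      rewrite <- !Rabs_mult. rewrite Er. rewrite !Rabs_mult. rewrite (Rabs_pos_eq (d^2)). auto.
      apply pow2_ge_0. }
    assert (Rabs r * L ^ 3 <= Rabs mu * R0 * d ^ 2).
    { pose proof (Rabs_pos r). pose proof (Rabs_pos mu). pose proof (pow2_ge_0 d).
      assert (Rabs r * L ^ 3 <= Rabs r * (2 * (L ^ 2 * Rabs (lam + d)))).
      { apply Rmult_le_compat_l; auto. assert (0 < L^2) by (apply pow_lt; auto). simpl. nra. }
      assert (Rabs mu * Rabs x2 * d ^ 2 <= Rabs mu * R0 * d ^ 2).
      { apply Rmult_le_compat_r; auto. apply Rmult_le_compat_l; auto. }
      lra. }
    unfold m. apply (Rmult_le_reg_r (L ^ 3)). apply pow_lt; auto.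
    replace (Rabs mu / L ^ 3 * R0 * d ^ 2 * L ^ 3) with (Rabs mu * R0 * d ^ 2). auto.
    field. lra. }
  assert (Hd2 : d ^ 2 <= lam ^ 2 / 4).
  { rewrite <- (pow2_abs d), <- (pow2_abs lam). pose proof (Rabs_pos d). nra. }
  assert (Hr2 : r ^ 2 <= m ^ 2 * R0 ^ 2 * d ^ 2 * (lam ^ 2 / 4)).
  { rewrite <- (pow2_abs r). pose proof (Rabs_pos r). pose proof (pow2_ge_0 d).
    assert (Rabs r ^ 2 <= (m * R0 * d ^ 2) ^ 2) by (apply pow_incr; auto).
    eapply Rle_trans. apply H1.
    replace ((m * R0 * d ^ 2) ^ 2) with (m ^ 2 * R0 ^ 2 * d ^ 2 * d ^ 2) by ring.
    apply Rmult_le_compat_l; auto. apply Rmult_le_pos; [|apply pow2_ge_0]. apply Rmult_le_pos; apply pow2_ge_0. }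
  assert (Hp2 : p ^ 2 <= Cp ^ 2 * R0 ^ 6).
  { rewrite <- (pow2_abs p). pose proof (Rabs_pos p).
    replace (Cp ^ 2 * R0 ^ 6) with ((Cp * R0 ^ 3) ^ 2) by ring. apply pow_incr; auto. }
  assert (Hsq : (d * p + r) ^ 2 <= 2 * (d ^ 2 * p ^ 2) + 2 * r ^ 2).
  { pose proof (pow2_ge_0 (d * p - r)). nra. }
  assert (HR2 : R0 ^ 2 <= R0 ^ 6) by (apply Rle_pow; auto; lia).
  assert (HR1 : R0 <= R0 ^ 6) by (rewrite <- (pow_1 R0) at 1; apply Rle_pow; auto; lia).
  pose proof (pow2_ge_0 d). pose proof (pow2_ge_0 m).
  assert (E1 : d ^ 2 * p ^ 2 <= d ^ 2 * (Cp ^ 2 * R0 ^ 6)) by (apply Rmult_le_compat_l; auto).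
  assert (E2 : m ^ 2 * R0 ^ 2 * d ^ 2 * (lam ^ 2 / 4) <= m ^ 2 * R0 ^ 6 * d ^ 2 * lam ^ 2 / 4).
  { assert (0 <= m ^ 2 * d ^ 2 * lam ^ 2 / 4). { unfold Rdiv; apply Rmult_le_pos; [|lra]; apply Rmult_le_pos; [apply Rmult_le_pos|]; apply pow2_ge_0. }
    nra. }
  assert (E3 : m * R0 * d ^ 2 <= m * R0 ^ 6 * d ^ 2).
  { apply Rmult_le_compat_r; auto. apply Rmult_le_compat_l; auto. }
  fold r. fold L. fold m.
  pose proof (pow2_ge_0 lam).
  assert (0 <= m ^ 2 * R0 ^ 6 * d ^ 2 * lam ^ 2).
  { apply Rmult_le_pos; [apply Rmult_le_pos; [apply Rmult_le_pos|]|]; try apply pow2_ge_0. apply pow_le; lra. }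
  nra.
Qed.


Definition Av (kappa : kernel) (h : R -> C) (u : R) (v : vec) : C := (kv kappa v * h (u - v 3%nat)%R)%C.
Definition ph (mu u l : R) (v : vec) := phs mu u l (v 3%nat) (v 2%nat) (v 1%nat) (v 0%nat).
Definition pp (mu u l : R) (v : vec) := pphi mu u l (v 3%nat) (v 2%nat) (v 1%nat) (v 0%nat).

Lemma rem_Re kappa h mu u lam d v :
  RV (Fint mu h u kappa (lam + d)) v - RV (Fint mu h u kappa lam) v - d * RV (dFint mu h u kappa lam) v =
  Re (Av kappa h u v) * (cos (ph mu u (lam + d) v) - cos (ph mu u lam v) + (d * pp mu u lam v) * sin (ph mu u lam v))
  - Im (Av kappa h u v) * (sin (ph mu u (lam + d) v) - sin (ph mu u lam v) - (d * pp mu u lam v) * cos (ph mu u lam v)).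
Proof. unfold RV, Fint, dFint, Av, kv, expi, ph, pp, Re, Im. simpl. ring. Qed.

Lemma rem_Im kappa h mu u lam d v :
  IV (Fint mu h u kappa (lam + d)) v - IV (Fint mu h u kappa lam) v - d * IV (dFint mu h u kappa lam) v =
  Re (Av kappa h u v) * (sin (ph mu u (lam + d) v) - sin (ph mu u lam v) - (d * pp mu u lam v) * cos (ph mu u lam v))
  + Im (Av kappa h u v) * (cos (ph mu u (lam + d) v) - cos (ph mu u lam v) + (d * pp mu u lam v) * sin (ph mu u lam v)).
Proof. unfold IV, Fint, dFint, Av, kv, expi, ph, pp, Re, Im. simpl. ring. Qed.

Lemma bracket_bounds mu u lam : lam <> 0 -> exists Cq, 0 <= Cq /\ forall d v, Rabs d <= Rabs lam / 2 ->
  Rabs (cos (ph mu u (lam + d) v) - cos (ph mu u lam v) + (d * pp mu u lam v) * sin (ph mu u lam v)) <= d ^ 2 * (Cq * rho v ^ 6) /\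
  Rabs (sin (ph mu u (lam + d) v) - sin (ph mu u lam v) - (d * pp mu u lam v) * cos (ph mu u lam v)) <= d ^ 2 * (Cq * rho v ^ 6).
Proof.
  intros Hl.
  destruct (pphi_Cls mu u lam) as [df [_ [Cp1 HCp]]].
  set (Cp := Rabs Cp1).
  exists (6 * Cp ^ 2 + 2 * (Rabs mu / Rabs lam ^ 3) ^ 2 * lam ^ 2 + Rabs mu / Rabs lam ^ 3). split.
  { assert (0 <= Rabs mu / Rabs lam ^ 3) by (apply Rdiv_le_0_compat; [apply Rabs_pos| apply pow_lt; apply Rabs_pos_lt; auto]).
    pose proof (pow2_ge_0 Cp). pose proof (pow2_ge_0 (Rabs mu / Rabs lam ^ 3)). pose proof (pow2_ge_0 lam). nra. }
  intros d v Hd.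
  assert (Hpb : Rabs (pp mu u lam v) <= Cp * rho v ^ 3).
  { destruct (HCp v) as [H _]. unfold rpow in H. eapply Rle_trans. apply H.
    apply Rmult_le_compat_r. apply pow_le; pose proof (rho_pos v); lra. apply Rle_abs. }
  assert (Hx2 : Rabs (v 2%nat) <= rho v) by (apply coord_le_rho; lia).
  assert (Hld : lam + d <> 0).
  { intro E. assert (Rabs d = Rabs lam) by (replace d with (- lam) by lra; apply Rabs_Ropp).
    pose proof (Rabs_pos_lt lam Hl). lra. }
  pose proof (phase_diff mu u lam d (v 3%nat) (v 2%nat) (v 1%nat) (v 0%nat) Hl Hld) as Epd.
  fold (ph mu u (lam + d) v) (ph mu u lam v) (pp mu u lam v) in Epd.
  set (r := mu * v 2%nat / 2 * (d ^ 2 / (lam ^ 2 * (lam + d)))) in *.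
  pose proof (brk lam d mu (v 2%nat) (pp mu u lam v) (rho v) Cp Hl Hd (rho_ge1 v) Hx2 (Rabs_pos _) Hpb) as Hb.
  fold r in Hb.
  set (th := ph mu u (lam + d) v - ph mu u lam v).
  assert (E1 : ph mu u (lam + d) v = ph mu u lam v + th) by (unfold th; ring).
  assert (E2 : th = d * pp mu u lam v + r) by (unfold th; lra).
  assert (E3 : th - d * pp mu u lam v = r) by lra.
  rewrite E1.
  pose proof (trig_cos (ph mu u lam v) th (d * pp mu u lam v)) as T1.
  pose proof (trig_sin (ph mu u lam v) th (d * pp mu u lam v)) as T2.
  rewrite E3 in T1, T2. rewrite E2 in T1, T2.
  rewrite E2. split; lra.
Qed.

Lemma pointwise_Re kappa h mu u lam : SchwartzC4 kappa -> SchwartzC1 h -> lam <> 0 ->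
  exists M, forall d, Rabs d <= Rabs lam / 2 -> forall v,
    Rabs (RV (Fint mu h u kappa (lam + d)) v - RV (Fint mu h u kappa lam) v - d * RV (dFint mu h u kappa lam) v) <= (M * d ^ 2) * W 4 v
 /\ Rabs (IV (Fint mu h u kappa (lam + d)) v - IV (Fint mu h u kappa lam) v - d * IV (dFint mu h u kappa lam) v) <= (M * d ^ 2) * W 4 v.
Proof.
  intros Hk Hh Hl.
  pose proof (kappa_nice kappa Hk) as NK.
  destruct (CD_mult 7 0 (kv kappa) (fun v => h (u - v 3%nat)) (NK 7%nat) (CT_h h u Hh)) as [[dfa [_ [CA1 HA1]]] [dfb [_ [CA2 HA2]]]].
  destruct (bracket_bounds mu u lam Hl) as [Cq [HCq HB]].
  set (CA := Rabs CA1 + Rabs CA2).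
  exists (2 * CA * Cq). intros d Hd v.
  destruct (HB d v Hd) as [B1 B2].
  destruct (HA1 v) as [A1 _]. destruct (HA2 v) as [A2 _].
  assert (Hr : rdec 7 v * rho v ^ 6 = W 4 v).
  { rewrite W4_rho. unfold rdec. pose proof (rho_pos v). field. lra. }
  assert (HW : 0 < W 4 v) by apply W_pos.
  assert (Hrd : 0 < rdec 7 v) by apply rdec_pos.
  assert (HRa : Rabs (Re (Av kappa h u v)) <= CA * rdec 7 v).
  { eapply Rle_trans. apply A1. apply Rmult_le_compat_r; try lra. unfold CA.
    pose proof (Rle_abs CA1). pose proof (Rabs_pos CA2). lra. }
  assert (HIa : Rabs (Im (Av kappa h u v)) <= CA * rdec 7 v).
  { eapply Rle_trans. apply A2. apply Rmult_le_compat_r; try lra. unfold CA.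
    pose proof (Rle_abs CA2). pose proof (Rabs_pos CA1). lra. }
  assert (HCA : 0 <= CA) by (unfold CA; pose proof (Rabs_pos CA1); pose proof (Rabs_pos CA2); lra).
  pose proof (pow2_ge_0 d).
  assert (Key : forall X Y P Q, Rabs X <= CA * rdec 7 v -> Rabs Y <= CA * rdec 7 v ->
     Rabs P <= d ^ 2 * (Cq * rho v ^ 6) -> Rabs Q <= d ^ 2 * (Cq * rho v ^ 6) ->
     Rabs (X * P) + Rabs (Y * Q) <= 2 * CA * Cq * d ^ 2 * W 4 v).
  { intros X Y P Q HX HY HP HQ. rewrite !Rabs_mult.
    assert (Rabs X * Rabs P <= (CA * rdec 7 v) * (d ^ 2 * (Cq * rho v ^ 6))) by
      (apply Rmult_le_compat; auto using Rabs_pos).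
    assert (Rabs Y * Rabs Q <= (CA * rdec 7 v) * (d ^ 2 * (Cq * rho v ^ 6))) by
      (apply Rmult_le_compat; auto using Rabs_pos).
    replace (2 * CA * Cq * d ^ 2 * W 4 v) with (2 * ((CA * rdec 7 v) * (d ^ 2 * (Cq * rho v ^ 6)))).
    lra. rewrite <- Hr. ring. }
  split.
  - rewrite rem_Re. eapply Rle_trans. 
    replace (Re (Av kappa h u v) * (cos (ph mu u (lam + d) v) - cos (ph mu u lam v) + d * pp mu u lam v * sin (ph mu u lam v)) -
             Im (Av kappa h u v) * (sin (ph mu u (lam + d) v) - sin (ph mu u lam v) - d * pp mu u lam v * cos (ph mu u lam v)))
      with (Re (Av kappa h u v) * (cos (ph mu u (lam + d) v) - cos (ph mu u lam v) + d * pp mu u lam v * sin (ph mu u lam v)) +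
             (- Im (Av kappa h u v)) * (sin (ph mu u (lam + d) v) - sin (ph mu u lam v) - d * pp mu u lam v * cos (ph mu u lam v))) by ring.
    apply Rabs_triang.
    eapply Rle_trans. apply Key; eauto. rewrite Rabs_Ropp; auto. right; ring.
  - rewrite rem_Im. eapply Rle_trans. apply Rabs_triang.
    eapply Rle_trans. apply Key; eauto. right; ring.
Qed.


Lemma quad_deriv_C (f : R -> C) x dd r M : 0 < r ->
  (forall d, Rabs d <= r -> Rabs (Re (f (x + d)) - Re (f x) - d * Re dd) <= M * d ^ 2 /\
                            Rabs (Im (f (x + d)) - Im (f x) - d * Im dd) <= M * d ^ 2) ->
  is_derive (V := C_R_NormedModule) f x dd.
Proof.
  intros Hr H. split.
  - apply is_linear_scal_l.
  - intros x0 Hx0. apply (is_filter_lim_locally_unique (K:=R_AbsRing) (V:=R_NormedModule)) in Hx0. subst x0.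
    intros eps.
    assert (Hd0 : 0 < Rmin r (eps / (2 * Rabs M + 1))).
    { apply Rmin_pos; auto. apply Rdiv_lt_0_compat. apply cond_pos. pose proof (Rabs_pos M); lra. }
    exists (mkposreal _ Hd0). intros y Hy.
    assert (Hyd : Rabs (y - x) < Rmin r (eps / (2 * Rabs M + 1))) by exact Hy.
    destruct (H (y - x)) as [H1 H2]. pose proof (Rmin_l r (eps / (2 * Rabs M + 1))); lra.
    assert (Ey : x + (y - x) = y) by (simpl; ring). rewrite Ey in H1, H2.
    change (norm (minus y x)) with (Rabs (y - x)).
    unfold norm, minus, plus, opp, scal; simpl. unfold prod_norm, prod_plus, prod_opp, prod_scal; simpl.
    set (a := Re (f y) - Re (f x) - (y - x) * Re dd) in *.
    set (b := Im (f y) - Im (f x) - (y - x) * Im dd) in *.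
    change (norm (plus (plus (fst (f y)) (opp (fst (f x)))) (opp (scal (y + - x) (fst dd))))) with (Rabs a).
    change (norm (plus (plus (snd (f y)) (opp (snd (f x)))) (opp (scal (y + - x) (snd dd))))) with (Rabs b).
    pose proof (Rabs_pos a). pose proof (Rabs_pos b).
    apply Rle_trans with (Rabs a + Rabs b).
    { rewrite <- (sqrt_Rsqr (Rabs a + Rabs b)) by lra. apply sqrt_le_1_alt. unfold Rsqr. nra. }
    pose proof (Rle_abs M). pose proof (Rabs_pos (y - x)).
    assert (Hq : Rabs (y - x) <= eps / (2 * Rabs M + 1)) by (pose proof (Rmin_r r (eps / (2 * Rabs M + 1))); lra).
    assert (E2 : (y - x) ^ 2 = Rabs (y - x) * Rabs (y - x)) by (rewrite <- (pow2_abs (y - x)); ring).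
    rewrite E2 in H1, H2.
    assert (Rabs M * (Rabs (y - x) * Rabs (y - x)) <= Rabs M * (Rabs (y - x) * (eps / (2 * Rabs M + 1)))).
    { apply Rmult_le_compat_l. apply Rabs_pos. apply Rmult_le_compat_l; auto. }
    assert (2 * Rabs M * (eps / (2 * Rabs M + 1)) <= eps).
    { pose proof (cond_pos eps). pose proof (Rabs_pos M).
      apply (Rmult_le_reg_r (2 * Rabs M + 1)). lra. field_simplify. nra. lra. }
    assert (M * (Rabs (y - x) * Rabs (y - x)) <= Rabs M * (Rabs (y - x) * Rabs (y - x))).
    { apply Rmult_le_compat_r. apply Rmult_le_pos; auto. auto. }
    nra.
Qed.

Lemma quad_est kappa h mu u lam : SchwartzC4 kappa -> SchwartzC1 h -> lam <> 0 ->
  exists M, forall d, Rabs d <= Rabs lam / 2 ->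
    Rabs (Re (piF (lam + d) mu kappa h u) - Re (piF lam mu kappa h u) - d * Re (cint4 (dFint mu h u kappa lam))) <= M * d ^ 2 /\
    Rabs (Im (piF (lam + d) mu kappa h u) - Im (piF lam mu kappa h u) - d * Im (cint4 (dFint mu h u kappa lam))) <= M * d ^ 2.
Proof.
  intros Hk Hh Hl.
  pose proof (kappa_nice kappa Hk) as NK.
  destruct (pointwise_Re kappa h mu u lam Hk Hh Hl) as [M HM].
  exists (M * K ^ 4). intros d Hd.
  destruct (Fint_CGood mu h u kappa (lam + d) NK Hh) as [G1r G1i].
  destruct (Fint_CGood mu h u kappa lam NK Hh) as [G0r G0i].
  destruct (dFint_CGood mu h u kappa lam NK Hh) as [GDr GDi].
  rewrite !piF_Fint, !cint4_Re, !cint4_Im.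
  split.
  - set (F1 := RV (Fint mu h u kappa (lam + d))). set (F0 := RV (Fint mu h u kappa lam)).
    set (FD := RV (dFint mu h u kappa lam)).
    assert (E : Iter 4 F1 v0 - Iter 4 F0 v0 - d * Iter 4 FD v0 =
      Iter 4 (fun v => 1 * F1 v + (-1) * F0 v + (- d) * FD v + 0 * FD v) v0).
    { rewrite Iter_lin4 by auto. ring. }
    rewrite E. replace (M * K ^ 4 * d ^ 2) with ((M * d ^ 2) * K ^ 4) by ring.
    apply Iter_bound. apply Good_lin4; auto.
    intros v. destruct (HM d Hd v) as [B _].
    replace (1 * F1 v + -1 * F0 v + - d * FD v + 0 * FD v) with (F1 v - F0 v - d * FD v) by ring. exact B.
  - set (F1 := IV (Fint mu h u kappa (lam + d))). set (F0 := IV (Fint mu h u kappa lam)).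
    set (FD := IV (dFint mu h u kappa lam)).
    assert (E : Iter 4 F1 v0 - Iter 4 F0 v0 - d * Iter 4 FD v0 =
      Iter 4 (fun v => 1 * F1 v + (-1) * F0 v + (- d) * FD v + 0 * FD v) v0).
    { rewrite Iter_lin4 by auto. ring. }
    rewrite E. replace (M * K ^ 4 * d ^ 2) with ((M * d ^ 2) * K ^ 4) by ring.
    apply Iter_bound. apply Good_lin4; auto.
    intros v. destruct (HM d Hd v) as [_ B].
    replace (1 * F1 v + -1 * F0 v + - d * FD v + 0 * FD v) with (F1 v - F0 v - d * FD v) by ring. exact B.
Qed.

Theorem mainTheorem4 (kappa : kernel) (h : R -> C) (lam mu u : R) :
  SchwartzC4 kappa -> SchwartzC1 h -> lam <> 0%R ->
  exists dpi : C,
    is_derive (V := C_R_NormedModule) (fun l => piF l mu kappa h u) lam dpi /\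
    DeltaX 4%nat lam mu kappa h u =
      (Ci * dpi
       - RtoC (mu / (2 * lam ^ 2) + u ^ 2 / 2) * DeltaX 2%nat lam mu kappa h u
       + RtoC u * DeltaX 3%nat lam mu kappa h u
       - piF lam mu (xmul 3%nat (xmul 1%nat kappa)) h u
       + RtoC u * piF lam mu (xmul 2%nat (xmul 1%nat kappa)) h u
       - RtoC (1 / 2) * piF lam mu (xmul 2%nat (xmul 1%nat (xmul 1%nat kappa))) h u)%C.
Proof.
  intros Hk Hh Hl.
  exists (cint4 (dFint mu h u kappa lam)). split.
  - destruct (quad_est kappa h mu u lam Hk Hh Hl) as [M HM].
    apply (quad_deriv_C _ lam _ (Rabs lam / 2) M).
    pose proof (Rabs_pos_lt lam Hl); lra.
    intros d Hd. apply HM; auto.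
  - apply identity; auto.
Qed.
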